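(* For every second-order sentence $\psi$ there is an $\mathbf{ID}$ sentence $\phi$ such that for every suitable structure $M$, $M\models\psi$ if and only if $M\models_{\{\emptyset\}}\phi$.
   Context: Fix a first-order signature; structures have non-empty domains. An assignment on $M$ is a function from a finite set of variables into the domain of $M$; $s(a/x)$ is the assignment agreeing with $s$ except that it sends $x$ to $a$. A team $X$ of $M$ is a set of assignments on $M$ all with the same domain $dom(X)$. For $F:X\to M$ put $X(F/x)=\{s(F(s)/x): s\in X\}$, and put $X(M/x)=\{s(a/x): a\in M, s\in X\}$. Formulas of intuitionistic dependence logic $\mathbf{ID}$ are generated by $\phi::=\alpha\mid =\!\!(t)\mid \bot\mid \phi\wedge\phi\mid \phi\veebar\phi\mid \phi\to\phi\mid \forall x\phi\mid\exists x\phi$, where $\alpha$ is a first-order atomic formula and $t$ a term. Free variables are defined as usual ($Fv(=\!\!(t))$ = variables of $t$); a sentence has no free variables. Team semantics, for $X$ with $dom(X)\supseteq$ the free variables: $M\models_X\alpha$ iff $M\models_s\alpha$ (Tarski) for all $s\in X$; $M\models_X =\!\!(t)$ iff $s(t)=s'(t)$ for all $s,s'\in X$; $M\models_X\bot$ iff $X=\emptyset$; $M\models_X\phi\wedge\psi$ iff both hold; $M\models_X\phi\veebar\psi$ iff $M\models_X\phi$ or $M\models_X\psi$; $M\models_X\phi\to\psi$ iff for every $Y\subseteq X$, $M\models_Y\phi$ implies $M\models_Y\psi$; $M\models_X\exists x\phi$ iff $M\models_{X(F/x)}\phi$ for some $F:X\to M$; $M\models_X\forall x\phi$ iff $M\models_{X(M/x)}\phi$.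 A sentence $\phi$ is true in $M$, written $M\models_{\{\emptyset\}}\phi$, if the team consisting only of the empty assignment satisfies it. $M\models\psi$ for a second-order sentence is standard second-order semantics. *)

(* Defs.v *)
From mathcomp Require Import all_boot.
From Stdlib Require Import PeanoNat.

Set Implicit Arguments.
Unset Strict Implicit.
Unset Printing Implicit Defensive.

Record signature := Signature {
  funs : Type;
  fun_ar : funs -> nat;
  rels : Type;
  rel_ar : rels -> nat
}.

Record structure (L : signature) := Structure {
  dom :> Type;
  dom_nonempty : inhabited dom;
  finterp : forall f : funs L, ('I_(fun_ar f) -> dom) -> dom;
  rinterp : forall R : rels L, ('I_(rel_ar R) -> dom) -> Prop
}.

Inductive term (L : signature) : Type :=
| Var : nat -> term L
| App : forall f : funs L, ('I_(fun_ar f) -> term L) -> term L.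

Arguments Var {L} _.
Arguments App {L} _ _.

Inductive term_var (L : signature) (y : nat) : term L -> Prop :=
| tv_var : term_var y (Var y)
| tv_app : forall f (ts : 'I_(fun_ar f) -> term L) i,
    term_var y (ts i) -> term_var y (App f ts).

(* Assignments: partial functions from variables into the domain
   (finite domain in every team reachable from the empty assignment). *)
Definition assignment (L : signature) (M : structure L) := nat -> option M.

Definition empty_assignment (L : signature) (M : structure L) : assignment M :=
  fun _ => None.

Definition upd (L : signature) (M : structure L) (s : assignment M) (x : nat)
    (a : M) : assignment M :=
  fun y => if Nat.eqb y x then Some a else s y.

(* Tarski value of a term under an assignment (relational, since
   assignments are partial): term_val s t a  means  s(t) = a. *)
Inductive term_val (L : signature) (M : structure L) (s : assignment M)
  : term L -> M -> Prop :=
| val_var : forall x a, s x = Some a -> term_val s (Var x) a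
| val_app : forall f (ts : 'I_(fun_ar f) -> term L) (vs : 'I_(fun_ar f) -> M),
    (forall i, term_val s (ts i) (vs i)) ->
    term_val s (App f ts) (@finterp L M f vs).

Inductive atom (L : signature) : Type :=
| AEq : term L -> term L -> atom L
| ARel : forall R : rels L, ('I_(rel_ar R) -> term L) -> atom L.

Definition atom_var (L : signature) (a : atom L) (y : nat) : Prop :=
  match a with
  | AEq t1 t2 => term_var y t1 \/ term_var y t2
  | ARel R ts => exists i, term_var y (ts i)
  end.

Definition atom_sat (L : signature) (M : structure L) (s : assignment M)
    (a : atom L) : Prop :=
  match a with
  | AEq t1 t2 => exists v, term_val s t1 v /\ term_val s t2 v
  | ARel R ts => exists vs : 'I_(rel_ar R) -> M,
      (forall i, term_val s (ts i) (vs i)) /\ @rinterp L M R vs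
  end.

Inductive id_formula (L : signature) : Type :=
| IAtom : atom L -> id_formula L
| IDep : term L -> id_formula L
| IBot : id_formula L
| IAnd : id_formula L -> id_formula L -> id_formula L
| IOr : id_formula L -> id_formula L -> id_formula L
| IImp : id_formula L -> id_formula L -> id_formula L
| IAll : nat -> id_formula L -> id_formula L
| IEx : nat -> id_formula L -> id_formula L.

Fixpoint id_free (L : signature) (phi : id_formula L) (y : nat) : Prop :=
  match phi with
  | IAtom a => atom_var a y
  | IDep t => term_var y t
  | IBot => False
  | IAnd p q | IOr p q | IImp p q => id_free p y \/ id_free q y
  | IAll x p | IEx x p => y <> x /\ id_free p y
  end.

Definition id_sentence (L : signature) (phi : id_formula L) : Prop :=
  forall y, ~ id_free phi y.

Definition team (L : signature) (M : structure L) := assignment M -> Prop.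

Definition team_supp (L : signature) (M : structure L) (X : team M) (x : nat)
    (F : assignment M -> M) : team M :=
  fun s' => exists s, X s /\ s' = upd s x (F s).

Definition team_dup (L : signature) (M : structure L) (X : team M) (x : nat)
    : team M :=
  fun s' => exists s a, X s /\ s' = upd s x a.

Fixpoint id_sat (L : signature) (M : structure L) (X : team M)
    (phi : id_formula L) : Prop :=
  match phi with
  | IAtom a => forall s, X s -> atom_sat s a
  | IDep t => forall s s', X s -> X s' ->
      forall v v', term_val s t v -> term_val s' t v' -> v = v'
  | IBot => forall s, ~ X s
  | IAnd p q => id_sat X p /\ id_sat X q
  | IOr p q => id_sat X p \/ id_sat X q
  | IImp p q => forall Y : team M, (forall s, Y s -> X s) ->
      id_sat Y p -> id_sat Y q
  | IAll x p => id_sat (team_dup X x) p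
  | IEx x p => exists F : assignment M -> M, id_sat (team_supp X x F) p
  end.

Definition id_true (L : signature) (M : structure L) (phi : id_formula L)
    : Prop :=
  id_sat (fun s => s = empty_assignment M) phi.

(* Relation variables are pairs (index, arity). *)
Inductive so_formula (L : signature) : Type :=
| SAtom : atom L -> so_formula L
| SRVar : nat -> forall n : nat, ('I_n -> term L) -> so_formula L
| SNeg : so_formula L -> so_formula L
| SAnd : so_formula L -> so_formula L -> so_formula L
| SOr : so_formula L -> so_formula L -> so_formula L
| SImp : so_formula L -> so_formula L -> so_formula L
| SAll : nat -> so_formula L -> so_formula L
| SEx : nat -> so_formula L -> so_formula L
| SAllR : nat -> nat -> so_formula L -> so_formula L
| SExR : nat -> nat -> so_formula L -> so_formula L.

Fixpoint so_free (L : signature) (phi : so_formula L) (y : nat) : Prop :=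
  match phi with
  | SAtom a => atom_var a y
  | SRVar _ n ts => exists i, term_var y (ts i)
  | SNeg p => so_free p y
  | SAnd p q | SOr p q | SImp p q => so_free p y \/ so_free q y
  | SAll x p | SEx x p => y <> x /\ so_free p y
  | SAllR _ _ p | SExR _ _ p => so_free p y
  end.

Fixpoint so_free_rel (L : signature) (phi : so_formula L) (k n : nat) : Prop :=
  match phi with
  | SAtom _ => False
  | SRVar k' n' _ => k' = k /\ n' = n
  | SNeg p => so_free_rel p k n
  | SAnd p q | SOr p q | SImp p q => so_free_rel p k n \/ so_free_rel q k n
  | SAll _ p | SEx _ p => so_free_rel p k n
  | SAllR k' n' p | SExR k' n' p => ~ (k' = k /\ n' = n) /\ so_free_rel p k n
  end.

Definition so_sentence (L : signature) (phi : so_formula L) : Prop :=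
  (forall y, ~ so_free phi y) /\ (forall k n, ~ so_free_rel phi k n).

Definition rel_env (L : signature) (M : structure L) :=
  nat -> forall n : nat, ('I_n -> M) -> Prop.

Definition rupd (L : signature) (M : structure L) (rho : rel_env M) (k n : nat)
    (P : ('I_n -> M) -> Prop) : rel_env M :=
  fun k' m =>
    match Nat.eq_dec n m with
    | left e => if Nat.eqb k' k
                then eq_rect n (fun j => ('I_j -> M) -> Prop) P m e
                else rho k' m
    | right _ => rho k' m
    end.

Arguments rupd {L M} rho k n P.

Fixpoint so_sat (L : signature) (M : structure L) (s : assignment M)
    (rho : rel_env M) (phi : so_formula L) : Prop :=
  match phi with
  | SAtom a => atom_sat s a
  | SRVar k n ts => exists vs : 'I_n -> M,
      (forall i, term_val s (ts i) (vs i)) /\ rho k n vs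
  | SNeg p => ~ so_sat s rho p
  | SAnd p q => so_sat s rho p /\ so_sat s rho q
  | SOr p q => so_sat s rho p \/ so_sat s rho q
  | SImp p q => so_sat s rho p -> so_sat s rho q
  | SAll x p => forall a : M, so_sat (upd s x a) rho p
  | SEx x p => exists a : M, so_sat (upd s x a) rho p
  | SAllR k n p => forall P : ('I_n -> M) -> Prop, so_sat s (rupd rho k n P) p
  | SExR k n p => exists P : ('I_n -> M) -> Prop, so_sat s (rupd rho k n P) p
  end.

Definition so_true (L : signature) (M : structure L) (psi : so_formula L)
    : Prop :=
  so_sat (empty_assignment M) (fun _ _ _ => False) psi.

(* Main.v *)
Require Import Defs.
From Stdlib Require Import PeanoNat Lia ClassicalEpsilon FunctionalExtensionality PropExtensionality Classical Eqdep_dec.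
From mathcomp Require Import all_boot zify.

Set Implicit Arguments.
Unset Strict Implicit.
Unset Printing Implicit Defensive.
Set Bullet Behavior "Strict Subproofs".


Lemma fchoice (A B : Type) (P : A -> B -> Prop) :
  (forall a, exists b, P a b) -> exists f : A -> B, forall a, P a (f a).
Proof.
  intro H. exists (fun a => proj1_sig (constructive_indefinite_description _ (H a))).
  intro a. exact (proj2_sig (constructive_indefinite_description _ (H a))).
Qed.

Lemma in_seq_In (T:eqType) (x:T) (s : seq T) : x \in s -> List.In x s.
Proof.
  elim: s => [//|y s IH]. rewrite inE => /orP [/eqP ->|H]. by left. right; auto.
Qed.

Fixpoint tren (L : signature) (sg : nat -> nat) (t : term L) : term L :=
  match t with
  | Var x => Var (sg x)
  | App f ts => App f (fun i => tren sg (ts i))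
  end.

Definition aren (L : signature) (sg : nat -> nat) (a : atom L) : atom L :=
  match a with
  | AEq t1 t2 => AEq (tren sg t1) (tren sg t2)
  | ARel R ts => @ARel L R (fun i => tren sg (ts i))
  end.

Definition acomp (L : signature) (M : structure L) (s : assignment M) (sg : nat -> nat)
  : assignment M := fun x => s (sg x).

Lemma term_val_inv (L : signature) (M : structure L) (s : assignment M) t v :
  term_val s t v ->
  match t with
  | Var x => s x = Some v
  | App f ts => exists vs, (forall i, term_val s (ts i) (vs i)) /\ v = @finterp L M f vs
  end.
Proof. destruct 1; eauto. Qed.

Lemma term_var_inv (L : signature) y (t : term L) :
  term_var y t -> match t with Var x => y = x | App f ts => exists i, term_var y (ts i) end.
Proof. destruct 1; eauto. Qed.

Lemma term_val_det (L : signature) (M : structure L) (s : assignment M) t v v' :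
  term_val s t v -> term_val s t v' -> v = v'.
Proof.
  intro H; revert v'; induction H as [x a Hx| f ts vs Hts IH]; intros v' H';
    apply term_val_inv in H'.
  - congruence.
  - destruct H' as [vs' [H1 ->]]. f_equal. apply functional_extensionality.
    intro i. apply IH. apply H1.
Qed.

Lemma term_val_ext (L : signature) (M : structure L) (s s' : assignment M) t v :
  (forall y, term_var y t -> s y = s' y) -> term_val s t v -> term_val s' t v.
Proof.
  intros H Hv; induction Hv as [x a Hx| f ts vs Hts IH].
  - constructor. rewrite <- H; auto. constructor.
  - constructor. intro i. apply IH. intros y Hy. apply H. econstructor; eauto.
Qed.

Lemma term_val_ren (L : signature) (M : structure L) (s : assignment M) sg t v :
  term_val s (tren sg t) v <-> term_val (acomp s sg) t v.
Proof.
  revert v; induction t as [x| f ts IH]; intro v; split; intro H; apply term_val_inv in H.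
  - constructor; exact H.
  - constructor; exact H.
  - destruct H as [vs [H ->]]. constructor. intro i. apply IH, H.
  - destruct H as [vs [H ->]]. simpl. constructor. intro i. apply IH, H.
Qed.

Lemma term_exists (L : signature) (M : structure L) (s : assignment M) t :
  (forall y, term_var y t -> s y <> None) -> exists v, term_val s t v.
Proof.
  induction t as [x| f ts IH]; intro H.
  - destruct (s x) as [a|] eqn:E. exists a. constructor; auto.
    exfalso; apply (H x); [constructor|auto].
  - assert (forall i, exists v, term_val s (ts i) v) as H1.
    { intro i. apply IH. intros y Hy. apply H. econstructor; eauto. }
    apply fchoice in H1. destruct H1 as [vs Hvs]. exists (@finterp L M f vs).
    constructor; auto.
Qed.

Lemma term_var_ren (L : signature) sg y (t : term L) :
  term_var y (tren sg t) -> exists x, term_var x t /\ y = sg x.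
Proof.
  induction t as [x| f ts IH]; intro H; apply term_var_inv in H.
  - exists x; split; [constructor|auto].
  - destruct H as [i Hi]. destruct (IH i Hi) as [x [H1 H2]]. exists x; split; auto.
    econstructor; eauto.
Qed.

Lemma atom_sat_ren (L : signature) (M : structure L) (s : assignment M) sg a :
  atom_sat s (aren sg a) <-> atom_sat (acomp s sg) a.
Proof.
  destruct a as [t1 t2| R ts]; simpl; split.
  - intros [v [H1 H2]]. exists v; split; apply term_val_ren; auto.
  - intros [v [H1 H2]]. exists v; split; apply term_val_ren; auto.
  - intros [vs [H1 H2]]. exists vs; split; auto. intro i; apply term_val_ren; auto.
  - intros [vs [H1 H2]]. exists vs; split; auto. intro i; apply term_val_ren; auto.
Qed.

Lemma atom_sat_ext (L : signature) (M : structure L) (s s' : assignment M) a :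
  (forall y, atom_var a y -> s y = s' y) -> atom_sat s a -> atom_sat s' a.
Proof.
  destruct a as [t1 t2| R ts]; simpl; intro H.
  - intros [v [H1 H2]]. exists v; split.
    + eapply term_val_ext; [|exact H1]. intros y Hy; apply H; auto.
    + eapply term_val_ext; [|exact H2]. intros y Hy; apply H; auto.
  - intros [vs [Hv1 Hv2]]. exists vs; split; auto. intro i. eapply term_val_ext; [|apply Hv1].
    intros y Hy. apply H. eauto.
Qed.

Lemma atom_var_ren (L : signature) sg (a : atom L) y :
  atom_var (aren sg a) y -> exists x, atom_var a x /\ y = sg x.
Proof.
  destruct a as [t1 t2| R ts]; simpl.
  - intros [H|H]; apply term_var_ren in H; destruct H as [x [H1 H2]]; exists x; auto.
  - intros [i H]; apply term_var_ren in H; destruct H as [x [H1 H2]]; exists x; eauto.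
Qed.

Lemma upd_eq (L : signature) (M : structure L) (s : assignment M) x a :
  upd s x a x = Some a.
Proof. unfold upd. rewrite Nat.eqb_refl. auto. Qed.

Lemma upd_neq (L : signature) (M : structure L) (s : assignment M) x a y :
  y <> x -> upd s x a y = s y.
Proof. intro H. unfold upd. apply Nat.eqb_neq in H. rewrite H. auto. Qed.

Lemma so_sat_ext (L : signature) (M : structure L) (q : so_formula L) :
  forall (s s' : assignment M) rho, (forall y, so_free q y -> s y = s' y) ->
  (so_sat s rho q <-> so_sat s' rho q).
Proof.
  induction q as [a|kk n ts|p IH|p IHp r IHr|p IHp r IHr|p IHp r IHr|x p IH|x p IH
                 |kk n p IH|kk n p IH]; intros s s' rho H; simpl in *.
  - split; apply atom_sat_ext; intros; [|symmetry]; auto.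
  - split; intros [vs [H1 H2]]; exists vs; split; auto; intro i;
      eapply term_val_ext; try apply H1; intros y Hy; [|symmetry]; apply H; eauto.
  - pose proof (IH s s' rho H); tauto.
  - assert (A1 := IHp s s' rho (fun y Hy => H y (or_introl Hy))).
    assert (A2 := IHr s s' rho (fun y Hy => H y (or_intror Hy))). tauto.
  - assert (A1 := IHp s s' rho (fun y Hy => H y (or_introl Hy))).
    assert (A2 := IHr s s' rho (fun y Hy => H y (or_intror Hy))). tauto.
  - assert (A1 := IHp s s' rho (fun y Hy => H y (or_introl Hy))).
    assert (A2 := IHr s s' rho (fun y Hy => H y (or_intror Hy))). tauto.
  - assert (forall a, so_sat (upd s x a) rho p <-> so_sat (upd s' x a) rho p) as E.
    { intro a. apply IH. intros y Hy. destruct (Nat.eq_dec y x) as [->|ne].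
      rewrite !upd_eq; auto. rewrite !upd_neq; auto. }
    split; intros H1 a; apply E; auto.
  - assert (forall a, so_sat (upd s x a) rho p <-> so_sat (upd s' x a) rho p) as E.
    { intro a. apply IH. intros y Hy. destruct (Nat.eq_dec y x) as [->|ne].
      rewrite !upd_eq; auto. rewrite !upd_neq; auto. }
    split; intros [a H1]; exists a; apply E; auto.
  - split; intros H1 P; eapply IH; try apply H1; auto. intros; symmetry; auto.
  - split; intros [P H1]; exists P; eapply IH; try apply H1; auto. intros; symmetry; auto.
Qed.


Lemma sat_dc (L : signature) (M : structure L) (phi : id_formula L) :
  forall X Y : team M, id_sat X phi -> (forall s, Y s -> X s) -> id_sat Y phi.
Proof.
  induction phi as [a|t| |p IHp q IHq|p IHp q IHq|p IHp q IHq|x p IH|x p IH];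
    intros X Y H HY; simpl in *.
  - intros s Hs; auto.
  - intros s s' Hs Hs'; apply H; auto.
  - intros s Hs; apply (H s); auto.
  - destruct H; split; eauto.
  - destruct H; [left|right]; eauto.
  - intros Z HZ; apply H; auto.
  - eapply IH; [exact H|]. intros s' [s0 [a [H1 H2]]]. exists s0, a; auto.
  - destruct H as [F HF]; exists F. eapply IH; [exact HF|].
    intros s' [s0 [H1 H2]]. exists s0; auto.
Qed.

Lemma sat_eqv (L : signature) (M : structure L) (phi : id_formula L) (X Y : team M) :
  (forall s, X s <-> Y s) -> (id_sat X phi <-> id_sat Y phi).
Proof. intro H; split; intro H1; eapply sat_dc; eauto; intro s; apply H. Qed.

Definition flat (L : signature) (M : structure L) (a : id_formula L) (A : assignment M -> Prop) :=
  forall Y : team M, id_sat Y a <-> forall s, Y s -> A s.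

Lemma imp_flat (L : signature) (M : structure L) (a p : id_formula L) A (X : team M) :
  flat a A -> (id_sat X (IImp a p) <-> id_sat (fun s => X s /\ A s) p).
Proof.
  intro Ha; simpl; split.
  - intro H. apply H. tauto. apply (proj2 (Ha _)). tauto.
  - intros H Y HY HYa. pose proof (proj1 (Ha Y) HYa) as HA. eapply sat_dc; [exact H|]. intros s Hs; split; auto.
Qed.

Lemma flat_atom (L : signature) (M : structure L) (a : atom L) :
  flat (M := M) (IAtom a) (fun s => atom_sat s a).
Proof. intro Y; simpl; tauto. Qed.

Definition itop (L : signature) : id_formula L := IImp (IBot L) (IBot L).
Definition ineg (L : signature) (p : id_formula L) : id_formula L := IImp p (IBot L).

Lemma sat_itop (L : signature) (M : structure L) (X : team M) : id_sat X (itop L).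
Proof. simpl; auto. Qed.

Lemma flat_neg (L : signature) (M : structure L) (a : id_formula L) A :
  flat (M := M) a A -> flat (M := M) (ineg a) (fun s => ~ A s).
Proof.
  intros Ha Y. unfold ineg. rewrite imp_flat; [|exact Ha]. simpl. split.
  - intros H s Hs HA. apply (H s); auto.
  - intros H s [Hs HA]. apply (H s); auto.
Qed.

Definition veq (L : signature) (u w : nat) : id_formula L := IAtom (AEq (Var u) (Var w)).

Lemma atom_sat_veq (L : signature) (M : structure L) (s : assignment M) u w :
  atom_sat s (AEq (Var u) (Var w) : atom L) <-> exists a, s u = Some a /\ s w = Some a.
Proof.
  simpl; split.
  - intros [v [H1 H2]]. apply term_val_inv in H1. apply term_val_inv in H2. eauto.
  - intros [v [H1 H2]]. exists v; split; constructor; auto.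
Qed.

Fixpoint ANDL (L : signature) (l : list (id_formula L)) : id_formula L :=
  match l with nil => itop L | cons a l => IAnd a (ANDL l) end.

Lemma sat_ANDL (L : signature) (M : structure L) (X : team M) l :
  id_sat X (ANDL l) <-> forall p, List.In p l -> id_sat X p.
Proof.
  induction l as [|a l IH]; simpl.
  - split; auto. tauto.
  - rewrite IH. split.
    + intros [H1 H2] p [<-|Hp]; auto.
    + intro H; split; auto.
Qed.

Definition compat (A : Type) (o o' : option A) := forall a b, o = Some a -> o' = Some b -> a = b.

Lemma compat_refl (A : Type) (o : option A) : compat o o.
Proof. intros a b -> H; congruence. Qed.

Lemma compat_eq (A : Type) (o o' : option A) :
  (o = None <-> o' = None) -> compat o o' -> o = o'.
Proof.
  destruct o as [a|], o' as [b|]; intros H1 H2; auto.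
  - f_equal; apply H2; auto.
  - destruct H1 as [_ H1]; discriminate (H1 erefl).
  - destruct H1 as [H1 _]; discriminate (H1 erefl).
Qed.

Lemma sat_dep1 (L : signature) (M : structure L) (X : team M) v :
  id_sat X (IDep (Var v) : id_formula L) <-> forall s s', X s -> X s' -> compat (s v) (s' v).
Proof.
  simpl; split.
  - intros H s s' Hs Hs' a b Ha Hb. apply (H s s' Hs Hs'); constructor; auto.
  - intros H s s' Hs Hs' a b Ha Hb. apply term_val_inv in Ha. apply term_val_inv in Hb.
    exact (H s s' Hs Hs' a b Ha Hb).
Qed.

Definition depf (L : signature) (l : list nat) (x : nat) : id_formula L :=
  IImp (ANDL (List.map (fun v => IDep (Var v)) l)) (IDep (Var x)).

Lemma sat_depf (L : signature) (M : structure L) (X : team M) l x :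
  id_sat X (depf L l x) <->
  forall s s', X s -> X s' -> (forall v, List.In v l -> compat (s v) (s' v)) -> compat (s x) (s' x).
Proof.
  unfold depf. simpl. split.
  - intros H s s' Hs Hs' Hl.
    set (Z := fun r => r = s \/ r = s').
    assert (HZ1 : forall r, Z r -> X r) by (intros r [E|E]; subst; auto).
    assert (HZ2 : id_sat Z (ANDL (List.map (fun v => IDep (Var v)) l))).
    { apply sat_ANDL. intros p Hp. apply List.in_map_iff in Hp. destruct Hp as [v [E Hv]].
      subst p. apply sat_dep1. intros r r' [E1|E1] [E2|E2]; subst r r'; try apply compat_refl; auto.
      intros a b Ha Hb. symmetry. exact (Hl v Hv b a Hb Ha). }
    pose proof (proj1 (sat_dep1 Z x) (H Z HZ1 HZ2)) as HZ. apply HZ; unfold Z; auto.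
  - intros H Z HZ HZl. apply (proj2 (sat_dep1 Z x)). intros r r' Hr Hr'. apply H; auto.
    intros v Hv. apply sat_ANDL with (p := IDep (Var v)) in HZl.
    + apply (proj1 (sat_dep1 Z v) HZl); auto.
    + apply List.in_map_iff. eauto.
Qed.

Fixpoint ALLs (L : signature) (l : list nat) (p : id_formula L) : id_formula L :=
  match l with nil => p | cons v l => IAll v (ALLs l p) end.

Fixpoint dups (L : signature) (M : structure L) (X : team M) (l : list nat) : team M :=
  match l with nil => X | cons v l => dups (team_dup X v) l end.

Lemma sat_ALLs (L : signature) (M : structure L) l (X : team M) (p : id_formula L) :
  id_sat X (ALLs l p) <-> id_sat (dups X l) p.
Proof. revert X; induction l as [|v l IH]; intro X; simpl; [tauto|apply IH]. Qed.

Lemma dups_char (L : signature) (M : structure L) l (X : team M) s' :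
  dups X l s' <-> exists s, X s /\ (forall v, ~ List.In v l -> s' v = s v) /\
                          (forall v, List.In v l -> s' v <> None).
Proof.
  revert X s'; induction l as [|w l IH]; intros X s'; simpl.
  - split.
    + intro H; exists s'; split; auto.
    + intros [s [H1 [H2 _]]].
      assert (E : s' = s) by (apply functional_extensionality; intro v; apply H2; auto).
      subst; auto.
  - split.
    + intro H. apply IH in H.
      destruct H as [s1 [[s [a [Hs E]]] [H2 H3]]]. subst s1. exists s; split; auto. split.
      * intros v Hv. rewrite H2. apply upd_neq. intro; subst; tauto. tauto.
      * intros v [E|Hv]; auto. subst v. destruct (List.in_dec Nat.eq_dec w l) as [Hin|Hn]; auto.
        rewrite H2; auto. rewrite upd_eq; discriminate.
    + intros [s [Hs [H2 H3]]]. apply IH.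
      destruct (s' w) as [a|] eqn:Ew; [|exfalso; apply (H3 w); auto].
      exists (upd s w a); split. exists s, a; auto. split.
      * intros v Hv. destruct (Nat.eq_dec v w) as [E|ne].
        -- subst v. rewrite upd_eq; auto.
        -- rewrite upd_neq; auto. apply H2. intros [?|?]; auto.
      * intros v Hv; apply H3; auto.
Qed.


Definition ycol (k i : nat) : nat := 2*k + 3 + 2*i.
Definition zcol (k : nat) : nat := 2*k + 1.
Fixpoint evl (m : nat) : list nat := match m with 0 => nil | S m' => 2*m' :: evl m' end.
Fixpoint ylist (k n : nat) : list nat := match n with 0 => nil | S n' => ycol k n' :: ylist k n' end.

Lemma in_evl v m : List.In v (evl m) <-> exists j, j < m /\ v = 2*j.
Proof.
  induction m as [|m IH]; simpl.
  - split; [tauto|]. intros [j [H _]]. lia.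
  - rewrite IH. split.
    + intros [E|[j [H1 H2]]]. exists m; split; [lia|auto]. exists j; split; [lia|auto].
    + intros [j [H1 H2]]. destruct (Nat.eq_dec j m) as [E|E]. left; subst; auto.
      right; exists j; split; [lia|auto].
Qed.

Lemma in_ylist v k n : List.In v (ylist k n) <-> exists i : 'I_n, v = ycol k i.
Proof.
  induction n as [|n IH]; simpl.
  - split; [tauto|]. intros [[i Hi] _]. lia.
  - rewrite IH. split.
    + intros [E|[i Hi]].
      * exists (Ordinal (ltnSn n)). auto.
      * exists (Ordinal (leqW (ltn_ord i))). auto.
    + intros [[i Hi] E]. simpl in E. destruct (Nat.eq_dec i n) as [E2|E2].
      * left; subst; auto.
      * right. assert (Hi' : i < n) by lia. exists (Ordinal Hi'). auto.
Qed.

Definition Gfam (L : signature) (M : structure L) :=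
  nat -> forall n : nat, assignment M -> ('I_n -> M) -> M.

Definition EncOK (L : signature) (M : structure L) (G : Gfam M) (m k : nat) (T : team M)
    (n m0 k0 : nat) : Prop :=
  m0 < m /\ k0 + n + 1 <= k /\
  (forall s s' : assignment M, (forall j, j <= m0 -> s (2*j) = s' (2*j)) -> G m0 n s = G m0 n s') /\
  (forall s, T s -> forall b : 'I_n -> M, (forall i : 'I_n, s (ycol k0 i) = Some (b i)) ->
      s (zcol k0) = Some (G m0 n s b)) /\
  (forall s, T s -> forall b : 'I_n -> M, exists s', T s' /\ (forall j, s (2*j) = s' (2*j)) /\
      forall i : 'I_n, s' (ycol k0 i) = Some (b i)).

Definition Good (L : signature) (M : structure L) (re : nat -> nat -> option (nat * nat))
    (G : Gfam M) (m k : nat) (T : team M) : Prop :=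
  (forall s s', T s -> T s' -> forall v, s v = None <-> s' v = None) /\
  (forall s, T s -> forall j, (m <= j -> s (2*j) = None) /\ (k <= j -> s (2*j+1) = None)) /\
  (forall s, T s -> forall j, j < m -> s (2*j) <> None) /\
  (forall kk n m0 k0, re kk n = Some (m0,k0) -> EncOK G m k T n m0 k0).

Lemma Good_sub (L : signature) (M : structure L) re (G : Gfam M) m k (T Y : team M) :
  Good re G m k T -> (forall s, Y s -> T s) ->
  (forall s s0, Y s -> T s0 -> (forall j, s (2*j) = s0 (2*j)) -> Y s0) ->
  Good re G m k Y.
Proof.
  intros [HU [HF [HD HE]]] HY HC. split; [|split; [|split]].
  - intros; apply HU; auto.
  - intros; apply HF; auto.
  - intros; apply HD; auto.
  - intros kk n m0 k0 Hre. destruct (HE _ _ _ _ Hre) as [H1 [H2 [H3 [H4 H5]]]].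
    split; [|split; [|split; [|split]]]; auto.
    intros s Hs b. destruct (H5 s (HY s Hs) b) as [s' [Hs' [E1 E2]]].
    exists s'; split; eauto.
Qed.

Lemma Good_step (L : signature) (M : structure L) re (G : Gfam M) m k (T T' : team M) :
  Good re G m k T ->
  (forall s', T' s' -> exists s a, T s /\ s' = upd s (2*m) a) ->
  (forall s s0 a, T s -> T' (upd s (2*m) a) -> T s0 -> (forall j, s (2*j) = s0 (2*j)) ->
     T' (upd s0 (2*m) a)) ->
  Good re G (m+1) k T'.
Proof.
  intros [HU [HF [HD HE]]] H1 H2. split; [|split; [|split]].
  - intros s1 s1' Hs1 Hs1' v.
    destruct (H1 _ Hs1) as [s [a [Hs E]]]; destruct (H1 _ Hs1') as [s' [a' [Hs' E']]]; subst.
    destruct (Nat.eq_dec v (2*m)) as [E|E].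
    + subst; rewrite !upd_eq; split; discriminate.
    + rewrite !upd_neq; auto.
  - intros s1 Hs1 j. destruct (H1 _ Hs1) as [s [a [Hs E]]]; subst.
    destruct (HF s Hs j) as [F1 F2].
    split; intro Hj.
    + rewrite upd_neq; [apply F1|]; lia.
    + rewrite upd_neq; [apply F2|]; lia.
  - intros s1 Hs1 j Hj. destruct (H1 _ Hs1) as [s [a [Hs E]]]; subst.
    destruct (Nat.eq_dec j m) as [E|E].
    + subst; rewrite upd_eq; discriminate.
    + rewrite upd_neq; [|lia]. apply HD; auto. lia.
  - intros kk n m0 k0 Hre. destruct (HE _ _ _ _ Hre) as [E1 [E2 [E3 [E4 E5]]]].
    split; [lia|split; [lia|split; [auto|split]]].
    + intros s1 Hs1 b Hb. destruct (H1 _ Hs1) as [s [a [Hs E]]]; subst.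
      rewrite upd_neq; [|unfold zcol; lia].
      rewrite (E3 _ s). apply E4; auto.
      * intro i. rewrite <- (Hb i). rewrite upd_neq; auto. unfold ycol; lia.
      * intros j Hj. rewrite upd_neq; auto. lia.
    + intros s1 Hs1 b. destruct (H1 _ Hs1) as [s [a [Hs E]]]; subst.
      destruct (E5 s Hs b) as [s' [Hs' [F1 F2]]].
      exists (upd s' (2*m) a). split; [eapply H2; eauto|split].
      * intro j. destruct (Nat.eq_dec j m) as [E|E].
        -- subst; rewrite !upd_eq; auto.
        -- rewrite !upd_neq; try lia. auto.
      * intro i. rewrite upd_neq; auto. unfold ycol; lia.
Qed.

Lemma Good_dup (L : signature) (M : structure L) re (G : Gfam M) m k (T : team M) :
  Good re G m k T -> Good re G (m+1) k (team_dup T (2*m)).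
Proof.
  intro HG. eapply Good_step; [exact HG| |].
  - intros s' [s [a [Hs E]]]; eauto.
  - intros s s0 a _ _ Hs0 _. exists s0, a; auto.
Qed.

Lemma upd_inj_other (L : signature) (M : structure L) (s s1 : assignment M) x a a1 y :
  upd s x a = upd s1 x a1 -> y <> x -> s y = s1 y.
Proof.
  intros E Hy. rewrite <- (upd_neq s a Hy), <- (upd_neq s1 a1 Hy). rewrite E; auto.
Qed.

Lemma upd_inj_val (L : signature) (M : structure L) (s s1 : assignment M) x a a1 :
  upd s x a = upd s1 x a1 -> a = a1.
Proof.
  intro E. assert (E2 : upd s x a x = upd s1 x a1 x) by (rewrite E; auto).
  rewrite !upd_eq in E2. congruence.
Qed.

Lemma Good_supp (L : signature) (M : structure L) re (G : Gfam M) m k (T : team M) F :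
  Good re G m k T ->
  (forall s s', T s -> T s' -> (forall j, j < m -> s (2*j) = s' (2*j)) -> F s = F s') ->
  Good re G (m+1) k (team_supp T (2*m) F).
Proof.
  intros HG HFi. eapply Good_step; [exact HG| |].
  - intros s' [s [Hs E]]; eauto.
  - intros s s0 a Hs [s1 [Hs1 E]] Hs0 Hj. exists s0; split; auto.
    assert (a = F s1) by (eapply upd_inj_val; eauto). subst a. f_equal.
    apply HFi; auto. intros j Hjm. rewrite <- Hj. symmetry.
    eapply upd_inj_other; eauto. lia.
Qed.

Lemma sat_EXd (L : signature) (M : structure L) (X : team M) m (p : id_formula L) :
  (forall s s', X s -> X s' -> forall v, s v = None <-> s' v = None) ->
  (id_sat X (IEx (2*m) (IAnd (depf L (evl m) (2*m)) p)) <->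
   exists F, (forall s s', X s -> X s' -> (forall j, j < m -> s (2*j) = s' (2*j)) -> F s = F s')
             /\ id_sat (team_supp X (2*m) F) p).
Proof.
  intro HU. split.
  - intros [F [Hd Hp]]. exists F; split; auto.
    intros s s' Hs Hs' Hj. apply (proj1 (sat_depf _ _ _)) with (s := upd s (2*m) (F s))
      (s' := upd s' (2*m) (F s')) in Hd.
    + apply Hd; rewrite upd_eq; auto.
    + exists s; auto.
    + exists s'; auto.
    + intros v Hv. apply in_evl in Hv. destruct Hv as [j [Hj1 ->]].
      rewrite !upd_neq; try lia. rewrite Hj; auto. apply compat_refl.
  - intros [F [HF Hp]]. exists F; split; auto.
    apply sat_depf. intros r r' [s [Hs ->]] [s' [Hs' ->]] Hl.
    rewrite !upd_eq. intros a b Ea Eb. injection Ea; injection Eb; intros; subst.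
    apply HF; auto. intros j Hj.
    assert (Hc := Hl (2*j) (proj2 (in_evl _ _) (ex_intro _ j (conj Hj erefl)))).
    rewrite !upd_neq in Hc; try lia. apply compat_eq; auto.
Qed.


Definition renv := nat -> nat -> option (nat * nat).

Definition reupd (re : renv) (kk n : nat) (o : option (nat * nat)) : renv :=
  fun kk' n' => if Nat.eqb kk' kk then (if Nat.eqb n' n then o else re kk' n') else re kk' n'.

Definition rhoG (L : signature) (M : structure L) (re : renv) (G : Gfam M) (s : assignment M)
  : rel_env M :=
  fun kk n => match re kk n with
              | Some (m0, _) => fun b => s (2*m0) = Some (G m0 n s b)
              | None => fun _ => False
              end.

Definition Gupd (L : signature) (M : structure L) (G : Gfam M) (m n : nat)
   (Gn : assignment M -> ('I_n -> M) -> M) : Gfam M :=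
  fun m' n' => if Nat.eqb m' m then
                 match Nat.eq_dec n n' with
                 | left e => eq_rect n (fun n0 => assignment M -> ('I_n0 -> M) -> M) Gn n' e
                 | right _ => G m' n'
                 end
               else G m' n'.
Arguments Gupd {L M} G m n Gn _ _.

Lemma Gupd_eq (L : signature) (M : structure L) (G : Gfam M) m n Gn : Gupd G m n Gn m n = Gn.
Proof.
  unfold Gupd. rewrite Nat.eqb_refl. destruct (Nat.eq_dec n n) as [e|ne].
  - rewrite (UIP_refl_nat _ e). reflexivity.
  - exfalso; auto.
Qed.

Lemma Gupd_neq (L : signature) (M : structure L) (G : Gfam M) m n Gn m' n' :
  m' <> m -> Gupd G m n Gn m' n' = G m' n'.
Proof. intro H. unfold Gupd. apply Nat.eqb_neq in H. rewrite H. auto. Qed.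

Definition Einv (L : signature) (M : structure L) (re : renv) (G : Gfam M) m :=
  forall kk n m0 k0, re kk n = Some (m0, k0) -> m0 < m /\
    (forall s s' : assignment M, (forall j, j <= m0 -> s (2*j) = s' (2*j)) -> G m0 n s = G m0 n s').

Lemma Good_Einv (L : signature) (M : structure L) re (G : Gfam M) m k (T : team M) :
  Good re G m k T -> Einv re G m.
Proof.
  intros [_ [_ [_ HE]]] kk n m0 k0 H. destruct (HE _ _ _ _ H) as [H1 [_ [H3 _]]]. auto.
Qed.

Lemma rho_inv (L : signature) (M : structure L) re (G : Gfam M) m (s s' : assignment M) :
  Einv re G m -> (forall j, j < m -> s (2*j) = s' (2*j)) -> rhoG re G s = rhoG re G s'.
Proof.
  intros HE Hj. apply functional_extensionality; intro kk.
  apply functional_extensionality_dep; intro n. unfold rhoG.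
  destruct (re kk n) as [[m0 k0]|] eqn:E; auto.
  destruct (HE _ _ _ _ E) as [H1 H2]. rewrite (H2 s s'); [|intros j Hj'; apply Hj; lia].
  rewrite Hj; auto.
Qed.

Lemma rhoG_none (L : signature) (M : structure L) re (G : Gfam M) (s : assignment M) kk n :
  rhoG (reupd re kk n None) G s = rupd (rhoG re G s) kk n (fun _ => False).
Proof.
  apply functional_extensionality; intro kk'.
  apply functional_extensionality_dep; intro n'. unfold rupd, rhoG, reupd.
  destruct (Nat.eq_dec n n') as [e|ne].
  - subst n'. simpl. rewrite Nat.eqb_refl. destruct (Nat.eqb kk' kk); auto.
  - assert (E : Nat.eqb n' n = false) by (apply Nat.eqb_neq; auto).
    rewrite E. destruct (Nat.eqb kk' kk); auto.
Qed.

Lemma rhoG_some (L : signature) (M : structure L) re (G : Gfam M) (s : assignment M) kk n m k Gn :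
  (forall kk' n' m0 k0, re kk' n' = Some (m0, k0) -> m0 < m) ->
  rhoG (reupd re kk n (Some (m, k))) (Gupd G m n Gn) s =
  rupd (rhoG re G s) kk n (fun b => s (2*m) = Some (Gn s b)).
Proof.
  intro HE. apply functional_extensionality; intro kk'.
  apply functional_extensionality_dep; intro n'. unfold rupd, rhoG, reupd.
  destruct (Nat.eq_dec n n') as [e|ne].
  - subst n'. simpl. rewrite Nat.eqb_refl. destruct (Nat.eqb kk' kk).
    + rewrite Gupd_eq. auto.
    + destruct (re kk' n) as [[m0 k0]|] eqn:E; auto.
      rewrite Gupd_neq; auto. specialize (HE _ _ _ _ E). lia.
  - assert (E : Nat.eqb n' n = false) by (apply Nat.eqb_neq; auto).
    rewrite E. destruct (Nat.eqb kk' kk);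
    (destruct (re kk' n') as [[m0 k0]|] eqn:E2; auto;
     rewrite Gupd_neq; auto; specialize (HE _ _ _ _ E2); lia).
Qed.

Definition WFs (L : signature) (sg : nat -> nat) (q : so_formula L) m :=
  forall y, so_free q y -> exists j, j < m /\ sg y = 2*j.

Definition polar (b : bool) (P : Prop) : Prop := if b then P else ~ P.

Lemma mean_inv (L : signature) (M : structure L) sg (q : so_formula L) re (G : Gfam M) m
  (s s' : assignment M) :
  WFs sg q m -> Einv re G m -> (forall j, j < m -> s (2*j) = s' (2*j)) ->
  (so_sat (acomp s sg) (rhoG re G s) q <-> so_sat (acomp s' sg) (rhoG re G s') q).
Proof.
  intros HW HE Hj. rewrite (rho_inv HE Hj). apply so_sat_ext.
  intros y Hy. destruct (HW y Hy) as [j [H1 H2]]. unfold acomp. rewrite H2. auto.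
Qed.

Definition EXd (L : signature) m (p : id_formula L) : id_formula L :=
  IEx (2*m) (IAnd (depf L (evl m) (2*m)) p).

Definition ORc (L : signature) m (p0 q0 p2 q2 : id_formula L) : id_formula L :=
  IOr (IOr p0 q0) (EXd m (EXd (m+1) (IAnd (IImp (veq L (2*m) (2*(m+1))) p2)
                                           (IImp (ineg (veq L (2*m) (2*(m+1)))) q2)))).

Definition depz (L : signature) m k n : id_formula L :=
  depf L (List.app (evl (m+1)) (ylist k n)) (zcol k).

Definition EXR (L : signature) m k n (pb pe : id_formula L) : id_formula L :=
  IOr pb (EXd m (ALLs (ylist k n) (IEx (zcol k) (IAnd (depz L m k n) pe)))).

Definition ALLR (L : signature) m k n (pb pe : id_formula L) : id_formula L :=
  IAnd pb (IAll (2*m) (ALLs (ylist k n) (IAll (zcol k) (IImp (depz L m k n) pe)))).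

Definition eqs (L : signature) (sg : nat -> nat) k n (ts : 'I_n -> term L) : id_formula L :=
  ANDL (List.map (fun i : 'I_n => IAtom (AEq (Var (ycol k i)) (tren sg (ts i)))) (enum 'I_n)).

Definition supd (sg : nat -> nat) (x v : nat) : nat -> nat :=
  fun y => if Nat.eqb y x then v else sg y.

Fixpoint tr (L : signature) (sg : nat -> nat) (re : renv) (m k : nat) (pol : bool)
    (q : so_formula L) {struct q} : id_formula L :=
  match q with
  | SAtom a => if pol then IAtom (aren sg a) else ineg (IAtom (aren sg a))
  | SRVar kk n ts =>
      match re kk n with
      | None => if pol then IBot L else itop L
      | Some (m0, k0) => IImp (eqs sg k0 ts)
           (if pol then veq L (zcol k0) (2*m0) else ineg (veq L (zcol k0) (2*m0)))
      end
  | SNeg p => tr sg re m k (negb pol) p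
  | SAnd p r => if pol then IAnd (tr sg re m k true p) (tr sg re m k true r)
                else ORc m (tr sg re m k false p) (tr sg re m k false r)
                           (tr sg re (m+2) k false p) (tr sg re (m+2) k false r)
  | SOr p r => if pol then ORc m (tr sg re m k true p) (tr sg re m k true r)
                           (tr sg re (m+2) k true p) (tr sg re (m+2) k true r)
               else IAnd (tr sg re m k false p) (tr sg re m k false r)
  | SImp p r => if pol then ORc m (tr sg re m k false p) (tr sg re m k true r)
                           (tr sg re (m+2) k false p) (tr sg re (m+2) k true r)
                else IAnd (tr sg re m k true p) (tr sg re m k false r)
  | SAll x p => if pol then IAll (2*m) (tr (supd sg x (2*m)) re (m+1) k true p)
                else EXd m (tr (supd sg x (2*m)) re (m+1) k false p)
  | SEx x p => if pol then EXd m (tr (supd sg x (2*m)) re (m+1) k true p)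
               else IAll (2*m) (tr (supd sg x (2*m)) re (m+1) k false p)
  | SAllR kk n p =>
      if pol then ALLR m k n (tr sg (reupd re kk n None) m k true p)
                              (tr sg (reupd re kk n (Some (m, k))) (m+1) (k+n+1) true p)
      else EXR m k n (tr sg (reupd re kk n None) m k false p)
                     (tr sg (reupd re kk n (Some (m, k))) (m+1) (k+n+1) false p)
  | SExR kk n p =>
      if pol then EXR m k n (tr sg (reupd re kk n None) m k true p)
                             (tr sg (reupd re kk n (Some (m, k))) (m+1) (k+n+1) true p)
      else ALLR m k n (tr sg (reupd re kk n None) m k false p)
                      (tr sg (reupd re kk n (Some (m, k))) (m+1) (k+n+1) false p)
  end.

Lemma uniform_single (L : signature) (M : structure L) (T : team M) (s s' : assignment M) :
  (forall a b : M, a = b) -> (forall v, s v = None <-> s' v = None) -> s = s'.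
Proof.
  intros H1 H2. apply functional_extensionality; intro v. specialize (H2 v).
  destruct (s v) as [a|], (s' v) as [b|]; auto.
  - f_equal; auto.
  - destruct H2 as [_ H2]; discriminate (H2 erefl).
  - destruct H2 as [H2 _]; discriminate (H2 erefl).
Qed.

Lemma flat_veq (L : signature) (M : structure L) u w :
  flat (M := M) (veq L u w) (fun s => exists a, s u = Some a /\ s w = Some a).
Proof.
  intro Y. unfold veq. simpl. split; intros H s Hs.
  - apply (proj1 (atom_sat_veq s u w)). exact (H s Hs).
  - exact (proj2 (atom_sat_veq s u w) (H s Hs)).
Qed.


Lemma Good_U (L : signature) (M : structure L) re (G : Gfam M) m k (T : team M) :
  Good re G m k T -> forall s s', T s -> T s' -> forall v, s v = None <-> s' v = None.
Proof. intros [H _]; exact H. Qed.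

Lemma sat_Or (L : signature) (M : structure L) (X : team M) (p q : id_formula L) :
  id_sat X (IOr p q) <-> id_sat X p \/ id_sat X q.
Proof. simpl; tauto. Qed.

Lemma sat_And (L : signature) (M : structure L) (X : team M) (p q : id_formula L) :
  id_sat X (IAnd p q) <-> id_sat X p /\ id_sat X q.
Proof. simpl; tauto. Qed.

Lemma sat_EXd' (L : signature) (M : structure L) (X : team M) m (p : id_formula L) :
  (forall s s', X s -> X s' -> forall v, s v = None <-> s' v = None) ->
  (id_sat X (EXd m p) <->
   exists F, (forall s s', X s -> X s' -> (forall j, j < m -> s (2*j) = s' (2*j)) -> F s = F s')
             /\ id_sat (team_supp X (2*m) F) p).
Proof. apply sat_EXd. Qed.

Lemma ORc_sem (L : signature) (M : structure L) re (G : Gfam M) m k (T : team M)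
  (p0 q0 p2 q2 : id_formula L) (A B : assignment M -> Prop) :
  Good re G m k T ->
  (forall T', Good re G m k T' -> (id_sat T' p0 <-> forall s, T' s -> A s)) ->
  (forall T', Good re G m k T' -> (id_sat T' q0 <-> forall s, T' s -> B s)) ->
  (forall T', Good re G (m+2) k T' -> (id_sat T' p2 <-> forall s, T' s -> A s)) ->
  (forall T', Good re G (m+2) k T' -> (id_sat T' q2 <-> forall s, T' s -> B s)) ->
  (forall s s', (forall j, j < m -> s (2*j) = s' (2*j)) -> (A s <-> A s')) ->
  (forall s s', (forall j, j < m -> s (2*j) = s' (2*j)) -> (B s <-> B s')) ->
  (id_sat T (ORc m p0 q0 p2 q2) <-> forall s, T s -> A s \/ B s).
Proof.
  intros HG Hp0 Hq0 Hp2 Hq2 HA HB.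
  pose proof (Good_U HG) as HU.
  set (EQ := fun s : assignment M => exists a, s (2*m) = Some a /\ s (2*(m+1)) = Some a).
  assert (Hsub : forall T2, Good re G (m+2) k T2 -> forall P : assignment M -> Prop,
     (forall s s0, (forall j, s (2*j) = s0 (2*j)) -> P s -> P s0) ->
     Good re G (m+2) k (fun s => T2 s /\ P s)).
  { intros T2 HG2 P HP. eapply Good_sub; [exact HG2| |].
    - intros s [H _]; auto.
    - intros s s0 [H1 H2] H3 H4. split; auto. eapply HP; eauto. }
  assert (HEQ : forall s s0, (forall j, s (2*j) = s0 (2*j)) -> EQ s -> EQ s0).
  { intros s s0 Hj [a [E1 E2]]. exists a. rewrite <- !Hj. auto. }
  assert (HNEQ : forall s s0, (forall j, s (2*j) = s0 (2*j)) -> ~ EQ s -> ~ EQ s0).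
  { intros s s0 Hj H1 H2. apply H1. eapply HEQ; [|exact H2]. intro j; symmetry; auto. }
  split.
  - intros [[H|H]|H].
    + intros s Hs; left. apply (proj1 (Hp0 T HG)); auto.
    + intros s Hs; right. apply (proj1 (Hq0 T HG)); auto.
    + unfold EXd in H. apply (proj1 (sat_EXd m _ HU)) in H. destruct H as [F1 [HF1 H]].
      pose proof (Good_supp HG HF1) as HG1.
      apply (proj1 (sat_EXd (m+1) _ (Good_U HG1))) in H. destruct H as [F2 [HF2 H]].
      pose proof (Good_supp HG1 HF2) as HG2.
      replace (m+1+1) with (m+2) in HG2 by lia.
      destruct H as [Ha Hb].
      apply (proj1 (imp_flat _ _ (flat_veq (M:=M) _ _))) in Ha.
      apply (proj1 (imp_flat _ _ (flat_neg (flat_veq (M:=M) _ _)))) in Hb.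
      pose proof (proj1 (Hp2 _ (Hsub _ HG2 _ HEQ)) Ha) as Ha'. clear Ha. rename Ha' into Ha.
      pose proof (proj1 (Hq2 _ (Hsub _ HG2 _ HNEQ)) Hb) as Hb'. clear Hb. rename Hb' into Hb.
      intros s Hs.
      set (s1 := upd s (2*m) (F1 s)). set (s2 := upd s1 (2*(m+1)) (F2 s1)).
      assert (Hs2 : team_supp (team_supp T (2*m) F1) (2*(m+1)) F2 s2).
      { exists s1; split; auto. exists s; split; auto. }
      assert (Hj : forall j, j < m -> s2 (2*j) = s (2*j)).
      { intros j Hj. unfold s2, s1. rewrite !upd_neq; auto; lia. }
      destruct (classic (EQ s2)) as [E|E].
      * left. apply (HA s2 s Hj). apply Ha; split; auto.
      * right. apply (HB s2 s Hj). apply Hb; split; auto.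
  - intro H. destruct (classic (exists a0 a1 : M, a0 <> a1)) as [[a0 [a1 Ha01]]|Hall].
    + apply (proj2 (sat_Or _ _ _)); right. apply (proj2 (sat_EXd' m _ HU)).
      assert (HF1 : forall s s', T s -> T s' -> (forall j, j < m -> s (2*j) = s' (2*j)) ->
                (fun _ : assignment M => a0) s = (fun _ => a0) s') by auto.
      exists (fun _ => a0). split; [exact HF1|].
      pose proof (Good_supp HG HF1) as HG1.
      apply (proj2 (sat_EXd' (m+1) _ (Good_U HG1))).
      set (F2 := fun s : assignment M => if excluded_middle_informative (A s) then a0 else a1).
      assert (HF2 : forall s s', team_supp T (2*m) (fun _ => a0) s ->
                 team_supp T (2*m) (fun _ => a0) s' ->
                 (forall j, j < m+1 -> s (2*j) = s' (2*j)) -> F2 s = F2 s').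
      { intros s s' _ _ Hj. unfold F2.
        destruct (excluded_middle_informative (A s)) as [X1|X1];
          destruct (excluded_middle_informative (A s')) as [X2|X2]; auto; exfalso.
        - apply X2. apply (HA s s'); auto. intros j Hj'; apply Hj; lia.
        - apply X1. apply (HA s s'); auto. intros j Hj'; apply Hj; lia. }
      exists F2; split; [exact HF2|].
      pose proof (Good_supp HG1 HF2) as HG2. replace (m+1+1) with (m+2) in HG2 by lia.
      assert (Hc : forall s2, team_supp (team_supp T (2*m) (fun _ => a0)) (2*(m+1)) F2 s2 ->
         exists s, T s /\ (forall j, j < m -> s2 (2*j) = s (2*j)) /\ (EQ s2 <-> A s)).
      { intros s2 [s1 [[s [Hs E1]] E2]]. subst s1 s2. exists s; split; auto.
        assert (Hj : forall j, j < m -> upd (upd s (2*m) a0) (2*(m+1)) (F2 (upd s (2*m) a0)) (2*j) = s (2*j)).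
        { intros j Hj; rewrite !upd_neq; auto; lia. }
        split; [exact Hj|].
        assert (E1 : upd (upd s (2*m) a0) (2*(m+1)) (F2 (upd s (2*m) a0)) (2*m) = Some a0).
        { rewrite upd_neq; [apply upd_eq|lia]. }
        assert (E2 : upd (upd s (2*m) a0) (2*(m+1)) (F2 (upd s (2*m) a0)) (2*(m+1)) =
                     Some (F2 (upd s (2*m) a0))) by apply upd_eq.
        assert (HA1 : A (upd s (2*m) a0) <-> A s).
        { apply HA. intros j Hj'. rewrite upd_neq; auto; lia. }
        unfold EQ. rewrite E1 E2. unfold F2.
        destruct (excluded_middle_informative (A (upd s (2*m) a0))) as [X|X].
        - split; [intros _; apply HA1; auto|intros _; exists a0; auto].
        - split.
          + intros [a [Ea Eb]]. exfalso. apply Ha01. injection Ea; injection Eb; intros; subst; auto.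
          + intro X2. exfalso. apply X. apply HA1; auto. }
      apply (proj2 (sat_And _ _ _)). split.
      * apply (proj2 (imp_flat _ _ (flat_veq (M:=M) _ _))).
        apply (proj2 (Hp2 _ (Hsub _ HG2 _ HEQ))). intros s2 [Hs2 E].
        destruct (Hc _ Hs2) as [s [Hs [Hj HE]]]. apply (HA s2 s Hj). apply HE; auto.
      * apply (proj2 (imp_flat _ _ (flat_neg (flat_veq (M:=M) _ _)))).
        apply (proj2 (Hq2 _ (Hsub _ HG2 _ HNEQ))). intros s2 [Hs2 E].
        destruct (Hc _ Hs2) as [s [Hs [Hj HE]]]. apply (HB s2 s Hj).
        destruct (H s Hs) as [X|X]; auto. exfalso; apply E; apply HE; auto.
    + assert (Hall' : forall a b : M, a = b).
      { intros a b; apply NNPP; intro X; apply Hall; eauto. }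
      destruct (classic (exists s0, T s0)) as [[s0 Hs0]|Hno].
      * destruct (H s0 Hs0) as [X|X].
        -- apply (proj2 (sat_Or _ _ _)); left; apply (proj2 (sat_Or _ _ _)); left. apply (proj2 (Hp0 T HG)). intros s Hs.
           rewrite (uniform_single T Hall' (HU s s0 Hs Hs0)). auto.
        -- apply (proj2 (sat_Or _ _ _)); left; apply (proj2 (sat_Or _ _ _)); right. apply (proj2 (Hq0 T HG)). intros s Hs.
           rewrite (uniform_single T Hall' (HU s s0 Hs Hs0)). auto.
      * apply (proj2 (sat_Or _ _ _)); left; apply (proj2 (sat_Or _ _ _)); left. apply (proj2 (Hp0 T HG)). intros s Hs.
        exfalso; apply Hno; eauto.
Qed.


Lemma In_enum n (i : 'I_n) : List.In i (enum 'I_n).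
Proof. apply in_seq_In. rewrite mem_enum. done. Qed.

Lemma flat_eqs (L : signature) (M : structure L) sg k0 n (ts : 'I_n -> term L) :
  flat (M:=M) (eqs sg k0 ts)
    (fun s => forall i : 'I_n, exists v, s (ycol k0 i) = Some v /\ term_val s (tren sg (ts i)) v).
Proof.
  intro Y. unfold eqs. split.
  - intros H s Hs i.
    assert (Hi := proj1 (sat_ANDL _ _) H (IAtom (AEq (Var (ycol k0 i)) (tren sg (ts i))))).
    destruct (Hi (List.in_map _ _ _ (In_enum i)) s Hs) as [v [H1 H2]].
    apply term_val_inv in H1. eauto.
  - intro H. apply (proj2 (sat_ANDL _ _)). intros p Hp. apply List.in_map_iff in Hp.
    destruct Hp as [i [E _]]. subst p. intros s Hs.
    destruct (H s Hs i) as [v [E1 E2]]. exists v; split; auto. constructor; auto.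
Qed.

Lemma read_sem (L : signature) (M : structure L) pol sg re (G : Gfam M) m k (T : team M)
    kk n (ts : 'I_n -> term L) m0 k0 :
  Good re G m k T -> WFs sg (SRVar kk ts) m -> re kk n = Some (m0, k0) ->
  (id_sat T (IImp (eqs sg k0 ts) (if pol then veq L (zcol k0) (2*m0)
                                   else ineg (veq L (zcol k0) (2*m0))))
   <-> forall s, T s -> polar pol (so_sat (acomp s sg) (rhoG re G s) (SRVar kk ts))).
Proof.
  intros HG HW Hre.
  destruct HG as [HU [HF [HD HE]]]. destruct (HE _ _ _ _ Hre) as [E1 [E2 [E3 [E4 E5]]]].
  assert (Hex : forall s, T s -> exists vs : 'I_n -> M, forall i, term_val s (tren sg (ts i)) (vs i)).
  { intros s Hs. apply (@fchoice _ _ (fun i v => term_val s (tren sg (ts i)) v)). intro i. apply term_exists. intros y Hy.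
    apply term_var_ren in Hy. destruct Hy as [x [Hx Ey]]. subst y.
    destruct (HW x (ex_intro _ i Hx)) as [j [Hj Ej]]. rewrite Ej. apply HD; auto. }
  assert (Hagree : forall s s' : assignment M, (forall j, s (2*j) = s' (2*j)) ->
            forall i v, term_val s (tren sg (ts i)) v -> term_val s' (tren sg (ts i)) v).
  { intros s s' Hj i v. apply term_val_ext. intros y Hy. apply term_var_ren in Hy.
    destruct Hy as [x [Hx Ey]]. subst y. destruct (HW x (ex_intro _ i Hx)) as [j [_ Ej]].
    rewrite Ej; auto. }
  assert (Hsem : forall s, so_sat (acomp s sg) (rhoG re G s) (SRVar kk ts) <->
            exists vs : 'I_n -> M, (forall i, term_val s (tren sg (ts i)) (vs i)) /\
                                   s (2*m0) = Some (G m0 n s vs)).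
  { intro s. simpl. unfold rhoG. rewrite Hre.
    split; intros [vs [H1 H2]]; exists vs; split; auto; intro i; apply term_val_ren; auto. }
  set (EQS := fun s : assignment M => forall i : 'I_n, exists v,
                 s (ycol k0 i) = Some v /\ term_val s (tren sg (ts i)) v).
  assert (Hys : forall s (vs : 'I_n -> M), EQS s -> (forall i, term_val s (tren sg (ts i)) (vs i)) ->
                 forall i : 'I_n, s (ycol k0 i) = Some (vs i)).
  { intros s vs HQ Hv i. destruct (HQ i) as [v [E Ev]]. rewrite E. f_equal.
    eapply term_val_det; eauto. }
  assert (HQv : forall s, EQS s -> exists vs, forall i, term_val s (tren sg (ts i)) (vs i)).
  { intros s HQ. apply (@fchoice _ _ (fun i v => term_val s (tren sg (ts i)) v)). intro i. destruct (HQ i) as [v [_ Ev]]. eauto. }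
  assert (Hmove : forall s, T s -> forall vs, (forall i, term_val s (tren sg (ts i)) (vs i)) ->
     exists s', T s' /\ EQS s' /\ s' (zcol k0) = Some (G m0 n s vs) /\ s' (2*m0) = s (2*m0)).
  { intros s Hs vs Hv. destruct (E5 s Hs vs) as [s' [Hs' [Hj Hy]]].
    exists s'; split; auto. split; [|split].
    - intro i. exists (vs i); split; auto. eapply Hagree; eauto.
    - rewrite (E4 s' Hs' vs Hy). rewrite (E3 s' s); auto.
    - auto. }
  destruct pol; simpl polar.
  - split.
    + intro H. pose proof (proj1 (imp_flat _ _ (flat_eqs (M:=M) sg k0 ts)) H) as H1.
      pose proof (proj1 (flat_veq _ _ _) H1) as H2. simpl in H2.
      intros s Hs. apply Hsem. destruct (Hex s Hs) as [vs Hvs].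
      destruct (Hmove s Hs vs Hvs) as [s' [Hs' [HQ [Ez Ec]]]].
      destruct (H2 s' (conj Hs' HQ)) as [a [Ea Eb]].
      rewrite Ez in Ea. injection Ea; intro; subst a.
      exists vs; split; auto. rewrite <- Ec; auto.
    + intro H. apply (proj2 (imp_flat _ _ (flat_eqs (M:=M) sg k0 ts))).
      apply (proj2 (flat_veq _ _ _)). intros s [Hs HQ].
      destruct (proj1 (Hsem s) (H s Hs)) as [vs [Hv Hc]].
      exists (G m0 n s vs); split; [apply E4; [exact Hs|apply Hys; auto]|exact Hc].
  - split.
    + intro H. pose proof (proj1 (imp_flat _ _ (flat_eqs (M:=M) sg k0 ts)) H) as H1.
      pose proof (proj1 (flat_neg (flat_veq (M:=M) _ _) _) H1) as H2. simpl in H2.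
      intros s Hs Hsat. apply Hsem in Hsat. destruct Hsat as [vs [Hv Hc]].
      destruct (Hmove s Hs vs Hv) as [s' [Hs' [HQ [Ez Ec]]]].
      apply (H2 s' (conj Hs' HQ)). exists (G m0 n s vs); split; auto. rewrite Ec; auto.
    + intro H. apply (proj2 (imp_flat _ _ (flat_eqs (M:=M) sg k0 ts))).
      apply (proj2 (flat_neg (flat_veq (M:=M) _ _) _)). intros s [Hs HQ] [a [Ea Eb]].
      destruct (HQv s HQ) as [vs Hv].
      apply (H s Hs). apply Hsem. exists vs; split; auto.
      rewrite (E4 s Hs vs (Hys s vs HQ Hv)) in Ea. injection Ea; intro; subst a. auto.
Qed.


Definition pt (L : signature) (M : structure L) : M := epsilon (dom_nonempty M) (fun _ => True).

Definition vals (L : signature) (M : structure L) k n (s : assignment M) : 'I_n -> M :=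
  fun i => odflt (pt M) (s (ycol k i)).
Arguments vals {L M} k n s _.

Definition newcol m k n (v : nat) : Prop :=
  v = 2*m \/ v = zcol k \/ exists i : 'I_n, v = ycol k i.

Definition extd (L : signature) (M : structure L) m k n (s s3 : assignment M) : Prop :=
  (forall v, ~ newcol m k n v -> s3 v = s v) /\ (forall v, newcol m k n v -> s3 v <> None).

Definition Yg (L : signature) (M : structure L) (T : team M) m k n
    (Cs : assignment M -> M -> Prop) (Gn : assignment M -> ('I_n -> M) -> M) : team M :=
  fun s3 => exists s, T s /\ extd m k n s s3 /\ (exists c, s3 (2*m) = Some c /\ Cs s c) /\
                      s3 (zcol k) = Some (Gn s3 (vals k n s3)).
Arguments Yg {L M} T m k n Cs Gn _.

Definition setys (L : signature) (M : structure L) k n (s : assignment M) (b : 'I_n -> M)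
  : assignment M :=
  fun v => match excluded_middle_informative (exists i : 'I_n, v = ycol k i) with
           | left H => Some (b (proj1_sig (constructive_indefinite_description _ H)))
           | right _ => s v
           end.

Lemma setys_y (L : signature) (M : structure L) k n (s : assignment M) b (i : 'I_n) :
  setys k s b (ycol k i) = Some (b i).
Proof.
  unfold setys. destruct (excluded_middle_informative _) as [H|H].
  - destruct (constructive_indefinite_description _ H) as [i' E]. simpl. do 2 f_equal.
    apply ord_inj. unfold ycol in E. lia.
  - exfalso; apply H; eauto.
Qed.

Lemma setys_o (L : signature) (M : structure L) k n (s : assignment M) (b : 'I_n -> M) v :
  (forall i : 'I_n, v <> ycol k i) -> setys k s b v = s v.
Proof.
  intro Hv. unfold setys. destruct (excluded_middle_informative _) as [H|H]; auto.
  exfalso. destruct H as [i E]. apply (Hv i E).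
Qed.

Definition cpy (L : signature) (M : structure L) (P : nat -> Prop) (s1 s2 : assignment M)
  : assignment M := fun v => if excluded_middle_informative (P v) then s1 v else s2 v.

Lemma cpy_in (L : signature) (M : structure L) P (s1 s2 : assignment M) v :
  P v -> cpy P s1 s2 v = s1 v.
Proof. intro H. unfold cpy. destruct (excluded_middle_informative (P v)); [reflexivity|contradiction]. Qed.

Lemma cpy_out (L : signature) (M : structure L) P (s1 s2 : assignment M) v :
  ~ P v -> cpy P s1 s2 v = s2 v.
Proof. intro H. unfold cpy. destruct (excluded_middle_informative (P v)); [contradiction|reflexivity]. Qed.

Lemma ycol_neq_even k (i : nat) j : ycol k i <> 2*j.
Proof. unfold ycol; lia. Qed.

Lemma newcol_even m k n j : newcol m k n (2*j) -> j = m.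
Proof. intros [E|[E|[i E]]]; unfold zcol, ycol in *; lia. Qed.

Lemma newcol_odd m k n j : newcol m k n (2*j+1) -> k <= j < k + n + 1.
Proof.
  intros [E|[E|[i E]]]; unfold zcol, ycol in *; try lia.
  pose proof (ltn_ord i). lia.
Qed.

Lemma not_new_ycol m k n k0 n0 (i : 'I_n0) : k0 + n0 + 1 <= k -> ~ newcol m k n (ycol k0 i).
Proof.
  intros H N. pose proof (ltn_ord i). destruct N as [E|[E|[i' E]]]; unfold zcol, ycol in *; lia.
Qed.

Lemma not_new_zcol m k n k0 : k0 < k -> ~ newcol m k n (zcol k0).
Proof. intros H N. destruct N as [E|[E|[i' E]]]; unfold zcol, ycol in *; lia. Qed.

Lemma compat_def (A : Type) (o o' : option A) : o <> None -> o' <> None -> compat o o' -> o = o'.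
Proof. destruct o, o'; intros H1 H2 H3; try congruence. f_equal; apply H3; auto. Qed.

Lemma vals_eq (L : signature) (M : structure L) k n (s : assignment M) (b : 'I_n -> M) :
  (forall i : 'I_n, s (ycol k i) = Some (b i)) -> vals k n s = b.
Proof. intro H. apply functional_extensionality; intro i. unfold vals. rewrite H. auto. Qed.

Lemma vals_some (L : signature) (M : structure L) k n (s : assignment M) (i : 'I_n) :
  s (ycol k i) <> None -> s (ycol k i) = Some (vals k n s i).
Proof. unfold vals. destruct (s (ycol k i)); simpl; congruence. Qed.

Lemma Good_Yg (L : signature) (M : structure L) re (G : Gfam M) m k (T : team M) kk n Cs Gn :
  Good re G m k T ->
  (forall s s', T s -> T s' -> (forall j, s (2*j) = s' (2*j)) -> forall c, Cs s c -> Cs s' c) ->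
  (forall s s', (forall j, j <= m -> s (2*j) = s' (2*j)) -> Gn s = Gn s') ->
  Good (reupd re kk n (Some (m, k))) (Gupd G m n Gn) (m+1) (k+n+1) (Yg T m k n Cs Gn).
Proof.
  intros [HU [HF [HD HE]]] HC HGn. split; [|split; [|split]].
  - intros s3 s3' [s [Hs [[X1 X2] _]]] [s' [Hs' [[Y1 Y2] _]]] v.
    destruct (classic (newcol m k n v)) as [N|N].
    + split; intro E; exfalso; [apply (X2 v N)|apply (Y2 v N)]; auto.
    + rewrite (X1 v N) (Y1 v N). auto.
  - intros s3 [s [Hs [[X1 X2] _]]] j. split; intro Hj.
    + rewrite X1. apply (HF s Hs j); lia. intro N; apply newcol_even in N; lia.
    + rewrite X1. apply (HF s Hs j); lia. intro N; apply newcol_odd in N; lia.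
  - intros s3 [s [Hs [[X1 X2] _]]] j Hj. destruct (Nat.eq_dec j m) as [E|E].
    + subst j. apply X2. left; auto.
    + rewrite X1. apply HD; auto; lia. intro N; apply newcol_even in N; lia.
  - intros kk' n' m0 k0 Hre. unfold reupd in Hre.
    destruct (Nat.eqb kk' kk) eqn:Ek; [destruct (Nat.eqb n' n) eqn:En|].
    + apply Nat.eqb_eq in En. subst n'. injection Hre; intros; subst m0 k0.
      split; [lia|split; [lia|split; [|split]]].
      * rewrite Gupd_eq. auto.
      * intros s3 [s [Hs [[X1 X2] [_ Hz]]]] b Hb. rewrite Gupd_eq. rewrite Hz.
        rewrite (vals_eq Hb). auto.
      * intros s3 [s [Hs [[X1 X2] [Hc Hz]]]] b.
        set (s3' := upd (setys k s3 b) (zcol k) (Gn s3 b)).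
        assert (Hev : forall j, s3 (2*j) = s3' (2*j)).
        { intro j. unfold s3'. rewrite upd_neq; [|unfold zcol; lia].
          rewrite setys_o; auto. intros i E; symmetry in E; apply (ycol_neq_even E). }
        assert (Hy : forall i : 'I_n, s3' (ycol k i) = Some (b i)).
        { intro i. unfold s3'. rewrite upd_neq; [|unfold zcol, ycol; lia]. apply setys_y. }
        exists s3'; split; [|split; auto].
        exists s; split; auto. split; [split|split].
        -- intros v N. unfold s3'. rewrite upd_neq; [|intro E; apply N; right; left; auto].
           rewrite setys_o; [|intros i E; apply N; right; right; eauto]. auto.
        -- intros v N. unfold s3'. destruct (Nat.eq_dec v (zcol k)) as [E|E].
           ++ subst v; rewrite upd_eq; discriminate.
           ++ rewrite upd_neq; auto. destruct (classic (exists i : 'I_n, v = ycol k i)) as [[i Ei]|Ni].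
              ** subst v; rewrite setys_y; discriminate.
              ** rewrite setys_o; [|intros i Ei; apply Ni; eauto]. apply X2; auto.
        -- destruct Hc as [c [Ec Hc]]. exists c; split; auto. rewrite <- Hev; auto.
        -- unfold s3' at 1. rewrite upd_eq. rewrite (vals_eq Hy). f_equal.
           rewrite (HGn s3 s3'); [reflexivity|intros j _; apply Hev].
    + specialize (HE _ _ _ _ Hre). destruct HE as [E1 [E2 [E3 [E4 E5]]]].
      assert (Hm0 : m0 <> m) by lia.
      split; [lia|split; [lia|split; [|split]]].
      * rewrite Gupd_neq; auto.
      * intros s3 [s [Hs [[X1 X2] _]]] b Hb. rewrite Gupd_neq; auto.
        rewrite X1; [|apply not_new_zcol; lia].
        rewrite (E3 s3 s). apply E4; auto.
        -- intro i. rewrite <- X1; auto. apply not_new_ycol; lia.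
        -- intros j Hj. apply X1. intro N; apply newcol_even in N; lia.
      * intros s3 [s [Hs [[X1 X2] [[c [Ec Hc]] Hz]]]] b.
        destruct (E5 s Hs b) as [s0 [Hs0 [Hj Hy]]].
        set (s3' := cpy (newcol m k n) s3 s0).
        assert (Hev : forall j, s3 (2*j) = s3' (2*j)).
        { intro j. unfold s3'. destruct (classic (newcol m k n (2*j))) as [N|N].
          - rewrite cpy_in; auto.
          - rewrite cpy_out; auto. rewrite X1; auto. }
        exists s3'. split; [|split; auto].
        -- exists s0; split; auto. split; [split|split].
           ++ intros v N. unfold s3'. rewrite cpy_out; auto.
           ++ intros v N. unfold s3'. rewrite cpy_in; auto.
           ++ exists c; split. rewrite <- Hev; auto. eapply HC; eauto.
           ++ unfold s3'. rewrite cpy_in; [|right; left; auto]. rewrite Hz.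
              f_equal. rewrite (HGn s3' s3); [|intros j _; symmetry; apply Hev].
              f_equal. apply functional_extensionality; intro i. unfold vals. rewrite cpy_in; auto.
              right; right; eauto.
        -- intro i. unfold s3'. rewrite cpy_out; auto. apply not_new_ycol; lia.
    + specialize (HE _ _ _ _ Hre). destruct HE as [E1 [E2 [E3 [E4 E5]]]].
      assert (Hm0 : m0 <> m) by lia.
      split; [lia|split; [lia|split; [|split]]].
      * rewrite Gupd_neq; auto.
      * intros s3 [s [Hs [[X1 X2] _]]] b Hb. rewrite Gupd_neq; auto.
        rewrite X1; [|apply not_new_zcol; lia].
        rewrite (E3 s3 s). apply E4; auto.
        -- intro i. rewrite <- X1; auto. apply not_new_ycol; lia.
        -- intros j Hj. apply X1. intro N; apply newcol_even in N; lia.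
      * intros s3 [s [Hs [[X1 X2] [[c [Ec Hc]] Hz]]]] b.
        destruct (E5 s Hs b) as [s0 [Hs0 [Hj Hy]]].
        set (s3' := cpy (newcol m k n) s3 s0).
        assert (Hev : forall j, s3 (2*j) = s3' (2*j)).
        { intro j. unfold s3'. destruct (classic (newcol m k n (2*j))) as [N|N].
          - rewrite cpy_in; auto.
          - rewrite cpy_out; auto. rewrite X1; auto. }
        exists s3'. split; [|split; auto].
        -- exists s0; split; auto. split; [split|split].
           ++ intros v N. unfold s3'. rewrite cpy_out; auto.
           ++ intros v N. unfold s3'. rewrite cpy_in; auto.
           ++ exists c; split. rewrite <- Hev; auto. eapply HC; eauto.
           ++ unfold s3'. rewrite cpy_in; [|right; left; auto]. rewrite Hz.
              f_equal. rewrite (HGn s3' s3); [|intros j _; symmetry; apply Hev].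
              f_equal. apply functional_extensionality; intro i. unfold vals. rewrite cpy_in; auto.
              right; right; eauto.
        -- intro i. unfold s3'. rewrite cpy_out; auto. apply not_new_ycol; lia.
Qed.


Lemma Good_reupd_none (L : signature) (M : structure L) re (G : Gfam M) m k (T : team M) kk n :
  Good re G m k T -> Good (reupd re kk n None) G m k T.
Proof.
  intros [HU [HF [HD HE]]]. split; [auto|split; [auto|split; [auto|]]].
  intros kk' n' m0 k0 H. unfold reupd in H.
  destruct (Nat.eqb kk' kk); [destruct (Nat.eqb n' n)|]; try discriminate; eauto.
Qed.

Lemma Yg_over (L : signature) (M : structure L) re (G : Gfam M) m k (T : team M) n Cs
    (Gn : assignment M -> ('I_n -> M) -> M) s c :
  Good re G m k T -> T s -> Cs s c ->
  (forall s s', (forall j, j <= m -> s (2*j) = s' (2*j)) -> Gn s = Gn s') ->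
  exists s3, Yg T m k n Cs Gn s3 /\ forall j, j < m -> s3 (2*j) = s (2*j).
Proof.
  intros HG Hs Hc HGn.
  set (s1 := upd s (2*m) c).
  set (s3 := upd (setys k s1 (fun _ : 'I_n => pt M)) (zcol k) (Gn s1 (fun _ => pt M))).
  assert (Hev : forall j, s3 (2*j) = s1 (2*j)).
  { intro j. unfold s3. rewrite upd_neq; [|unfold zcol; lia].
    rewrite setys_o; auto. intros i E; symmetry in E; apply (ycol_neq_even E). }
  assert (Hy : forall i : 'I_n, s3 (ycol k i) = Some (pt M)).
  { intro i. unfold s3. rewrite upd_neq; [|unfold zcol, ycol; lia]. apply setys_y. }
  exists s3. split.
  - exists s; split; auto. split; [split|split].
    + intros v N. unfold s3. rewrite upd_neq; [|intro E; apply N; right; left; auto].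
      rewrite setys_o; [|intros i E; apply N; right; right; eauto].
      unfold s1. rewrite upd_neq; auto. intro E; apply N; left; auto.
    + intros v N. unfold s3. destruct (Nat.eq_dec v (zcol k)) as [E|E].
      * subst v; rewrite upd_eq; discriminate.
      * rewrite upd_neq; auto. destruct (classic (exists i : 'I_n, v = ycol k i)) as [[i Ei]|Ni].
        -- subst v; rewrite setys_y; discriminate.
        -- rewrite setys_o; [|intros i Ei; apply Ni; eauto].
           destruct N as [N|[N|N]]; try tauto. subst v. unfold s1. rewrite upd_eq; discriminate.
    + exists c; split; auto. rewrite Hev. unfold s1. apply upd_eq.
    + unfold s3 at 1. rewrite upd_eq. f_equal.
      rewrite (vals_eq Hy). rewrite (HGn s1 s3); [reflexivity|intros j _; symmetry; apply Hev].
  - intros j Hj. rewrite Hev. unfold s1. rewrite upd_neq; auto. lia.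
Qed.

Lemma Yg_depz (L : signature) (M : structure L) re' (G' : Gfam M) m k k' n (Y : team M)
    (Gn : assignment M -> ('I_n -> M) -> M) :
  Good re' G' (m+1) k' Y ->
  (forall s, Y s -> s (zcol k) = Some (Gn s (vals k n s))) ->
  (forall s, Y s -> forall i : 'I_n, s (ycol k i) <> None) ->
  (forall s s', (forall j, j <= m -> s (2*j) = s' (2*j)) -> Gn s = Gn s') ->
  id_sat Y (depz L m k n).
Proof.
  intros [HU [HF [HD HE]]] Hz Hy HGn. unfold depz. apply sat_depf.
  intros s s' Hs Hs' Hl. rewrite (Hz s Hs) (Hz s' Hs').
  assert (E1 : Gn s = Gn s').
  { apply HGn. intros j Hj. apply compat_def; try (apply HD; auto; lia).
    apply Hl. apply List.in_or_app. left. apply in_evl. exists j; split; auto; lia. }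
  assert (E2 : vals k n s = vals k n s').
  { apply functional_extensionality; intro i. unfold vals. f_equal.
    apply compat_def; try apply Hy; auto.
    apply Hl. apply List.in_or_app. right. apply in_ylist. eauto. }
  rewrite E1 E2. apply compat_refl.
Qed.

Definition GnY (L : signature) (M : structure L) (Y : team M) m k n
  : assignment M -> ('I_n -> M) -> M :=
  fun s b => epsilon (inhabits (pt M)) (fun a => exists y, Y y /\
      (forall j, j <= m -> y (2*j) = s (2*j)) /\ (forall i : 'I_n, y (ycol k i) = Some (b i)) /\
      y (zcol k) = Some a).
Arguments GnY {L M} Y m k n _ _.

Lemma GnY_inv (L : signature) (M : structure L) (Y : team M) m k n (s s' : assignment M) :
  (forall j, j <= m -> s (2*j) = s' (2*j)) -> GnY Y m k n s = GnY Y m k n s'.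
Proof.
  intro Hj. apply functional_extensionality; intro b. unfold GnY. f_equal.
  apply functional_extensionality; intro a. apply propositional_extensionality.
  split; intros [y [H1 [H2 [H3 H4]]]]; exists y; split; auto; split; auto;
    intros j Hj'; [rewrite <- Hj|rewrite Hj]; auto.
Qed.

Lemma depz_Gn (L : signature) (M : structure L) (Y : team M) m k n :
  id_sat Y (depz L m k n) ->
  (forall y, Y y -> forall i : 'I_n, y (ycol k i) <> None) ->
  forall y, Y y -> y (zcol k) <> None -> y (zcol k) = Some (GnY Y m k n y (vals k n y)).
Proof.
  intros Hd Hy y HY Hz. destruct (y (zcol k)) as [a|] eqn:Ea; [|congruence].
  unfold GnY.
  match goal with |- Some a = Some (epsilon ?i ?P) => assert (HP : P (epsilon i P)) end.
  { apply epsilon_spec. exists a, y. split; auto. split; auto. split; auto.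
    intro i. apply vals_some. apply Hy; auto. }
  destruct HP as [y' [HY' [Hj [Hi Hz']]]].
  unfold depz in Hd.
  pose proof (proj1 (sat_depf Y (List.app (evl (m+1)) (ylist k n)) (zcol k)) Hd y' y HY' HY) as Hd2.
  assert (Hc : compat (y' (zcol k)) (y (zcol k))).
  { apply Hd2. intros v Hv. apply List.in_app_or in Hv. destruct Hv as [Hv|Hv].
    + apply in_evl in Hv. destruct Hv as [j [Hjm ->]]. rewrite Hj; [apply compat_refl|lia].
    + apply in_ylist in Hv. destruct Hv as [i ->]. rewrite Hi.
      rewrite (vals_some (Hy y HY i)). apply compat_refl. }
  rewrite Hz' Ea in Hc. f_equal. symmetry. apply Hc; auto.
Qed.

Lemma EXR_team (L : signature) (M : structure L) (T : team M) m k n Fc Fz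
    (Gn : assignment M -> ('I_n -> M) -> M) :
  (forall s s', (forall j, j <= m -> s (2*j) = s' (2*j)) -> Gn s = Gn s') ->
  (forall s3, team_supp (dups (team_supp T (2*m) Fc) (ylist k n)) (zcol k) Fz s3 ->
      s3 (zcol k) = Some (Gn s3 (vals k n s3))) ->
  forall s3, team_supp (dups (team_supp T (2*m) Fc) (ylist k n)) (zcol k) Fz s3 <->
             Yg T m k n (fun s c => c = Fc s) Gn s3.
Proof.
  intros HGn HFn s3. split.
  - intro H3. pose proof (HFn s3 H3) as Hz.
    destruct H3 as [s2 [H2 E3]].
    apply dups_char in H2. destruct H2 as [s1 [[s [Hs E1]] [D1 D2]]]. subst s1.
    exists s; split; auto. split; [split|split; auto].
    + intros v N. assert (v <> zcol k) by (intro E; apply N; right; left; auto).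
      rewrite E3 upd_neq; auto. rewrite D1. apply upd_neq. intro E; apply N; left; auto.
      intro Hin. apply in_ylist in Hin. apply N; right; right; auto.
    + intros v N. rewrite E3. destruct (Nat.eq_dec v (zcol k)) as [E|E].
      * subst v; rewrite upd_eq; discriminate.
      * rewrite upd_neq; auto. destruct N as [N|[N|N]]; try tauto.
        -- subst v. rewrite D1. rewrite upd_eq; discriminate.
           intro Hin; apply in_ylist in Hin. destruct Hin as [i Ei].
           symmetry in Ei; apply (ycol_neq_even Ei).
        -- apply D2. apply in_ylist; auto.
    + exists (Fc s). split; auto. rewrite E3 upd_neq; [|unfold zcol; lia].
      rewrite D1. apply upd_eq. intro Hin; apply in_ylist in Hin. destruct Hin as [i Ei].
      symmetry in Ei; apply (ycol_neq_even Ei).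
  - intros [s [Hs [[X1 X2] [[c [Ec Hc]] Hz]]]]. subst c.
    set (s2 := fun v => if Nat.eqb v (zcol k) then s v else s3 v).
    assert (H2 : dups (team_supp T (2*m) Fc) (ylist k n) s2).
    { apply dups_char. exists (upd s (2*m) (Fc s)). split; [exists s; auto|split].
      - intros v Hv. unfold s2. destruct (Nat.eqb_spec v (zcol k)) as [E|E].
        + subst v. rewrite upd_neq; auto. unfold zcol; lia.
        + destruct (Nat.eq_dec v (2*m)) as [E2|E2].
          * subst v. rewrite upd_eq. auto.
          * rewrite upd_neq; auto. apply X1. intros [N|[N|N]]; try tauto.
            apply Hv, in_ylist; auto.
      - intros v Hv. unfold s2. destruct (Nat.eqb_spec v (zcol k)) as [E|E].
        + subst v. apply in_ylist in Hv. destruct Hv as [i Ei]. unfold zcol, ycol in Ei. lia.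
        + apply X2. right; right. apply in_ylist; auto. }
    assert (E : upd s2 (zcol k) (Fz s2) = s3).
    { assert (H3 := HFn (upd s2 (zcol k) (Fz s2)) (ex_intro _ s2 (conj H2 erefl))).
      rewrite upd_eq in H3. apply functional_extensionality; intro v.
      destruct (Nat.eq_dec v (zcol k)) as [Ev|Ev].
      - subst v. rewrite upd_eq H3 Hz. f_equal.
        assert (Hs2 : forall v, v <> zcol k -> upd s2 (zcol k) (Fz s2) v = s3 v).
        { intros v Hv. rewrite upd_neq; auto. unfold s2.
          apply Nat.eqb_neq in Hv. rewrite Hv. auto. }
        rewrite (HGn _ s3); [|intros j _; apply Hs2; unfold zcol; lia].
        f_equal. apply functional_extensionality; intro i. unfold vals.
        rewrite Hs2; auto. unfold zcol, ycol; lia.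
      - rewrite upd_neq; auto. unfold s2. apply Nat.eqb_neq in Ev. rewrite Ev. auto. }
    rewrite <- E. exists s2; split; auto.
Qed.

Lemma ALLR_char (L : signature) (M : structure L) (T : team M) m k n s3 :
  team_dup (dups (team_dup T (2*m)) (ylist k n)) (zcol k) s3 <->
  exists s, T s /\ extd m k n s s3.
Proof.
  split.
  - intros [s2 [a [H2 E3]]].
    apply dups_char in H2. destruct H2 as [s1 [[s [c [Hs E1]]] [D1 D2]]]. subst s1.
    exists s; split; auto. split.
    + intros v N. assert (v <> zcol k) by (intro E; apply N; right; left; auto).
      rewrite E3 upd_neq; auto. rewrite D1. apply upd_neq. intro E; apply N; left; auto.
      intro Hin. apply in_ylist in Hin. apply N; right; right; auto.
    + intros v N. rewrite E3. destruct (Nat.eq_dec v (zcol k)) as [E|E].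
      * subst v; rewrite upd_eq; discriminate.
      * rewrite upd_neq; auto. destruct N as [N|[N|N]]; try tauto.
        -- subst v. rewrite D1. rewrite upd_eq; discriminate.
           intro Hin; apply in_ylist in Hin. destruct Hin as [i Ei].
           symmetry in Ei; apply (ycol_neq_even Ei).
        -- apply D2. apply in_ylist; auto.
  - intros [s [Hs [X1 X2]]].
    destruct (s3 (2*m)) as [c|] eqn:Ec; [|exfalso; apply (X2 (2*m)); auto; left; auto].
    destruct (s3 (zcol k)) as [a|] eqn:Ea; [|exfalso; apply (X2 (zcol k)); auto; right; left; auto].
    set (s2 := fun v => if Nat.eqb v (zcol k) then s v else s3 v).
    exists s2, a. split.
    + apply dups_char. exists (upd s (2*m) c). split; [exists s, c; auto|split].
      * intros v Hv. unfold s2. destruct (Nat.eqb_spec v (zcol k)) as [E|E].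
        -- subst v. rewrite upd_neq; auto. unfold zcol; lia.
        -- destruct (Nat.eq_dec v (2*m)) as [E2|E2].
           ++ subst v. rewrite upd_eq. auto.
           ++ rewrite upd_neq; auto. apply X1. intros [N|[N|N]]; try tauto.
              apply Hv, in_ylist; auto.
      * intros v Hv. unfold s2. destruct (Nat.eqb_spec v (zcol k)) as [E|E].
        -- subst v. apply in_ylist in Hv. destruct Hv as [i Ei]. unfold zcol, ycol in Ei. lia.
        -- apply X2. right; right. apply in_ylist; auto.
    + apply functional_extensionality; intro v. destruct (Nat.eq_dec v (zcol k)) as [Ev|Ev].
      * subst v. rewrite upd_eq; auto.
      * rewrite upd_neq; auto. unfold s2. apply Nat.eqb_neq in Ev. rewrite Ev. auto.
Qed.


Lemma a1_cases (L : signature) (M : structure L) :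
  epsilon (inhabits (pt M)) (fun a => a <> pt M) <> pt M \/ (forall a b : M, a = b).
Proof.
  destruct (classic (epsilon (inhabits (pt M)) (fun a => a <> pt M) = pt M)) as [E|E]; auto.
  right. assert (H : forall a : M, a = pt M).
  { intro a. apply NNPP. intro Ha. apply (epsilon_spec (inhabits (pt M)) (fun a => a <> pt M)); eauto. }
  intros a b; rewrite (H a) (H b); auto.
Qed.

Lemma fun_single (L : signature) (M : structure L) n :
  (forall a b : M, a = b) -> forall f g : 'I_n -> M, f = g.
Proof. intros H f g. apply functional_extensionality; auto. Qed.

Lemma Yg_extd (L : signature) (M : structure L) (T : team M) m k n Cs Gn s3 :
  Yg T m k n Cs Gn s3 -> exists s, T s /\ extd m k n s s3 /\ forall j, j < m -> s3 (2*j) = s (2*j).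
Proof.
  intros [s [Hs [[X1 X2] _]]]. exists s; split; auto. split; [split; auto|].
  intros j Hj. apply X1. intro N; apply newcol_even in N; lia.
Qed.


Lemma EXR_sem (L : signature) (M : structure L) re (G : Gfam M) m k (T : team M) kk n
   (pb pe : id_formula L) (Phi : assignment M -> rel_env M -> Prop) :
  Good re G m k T ->
  (forall T', Good (reupd re kk n None) G m k T' ->
      (id_sat T' pb <-> forall s, T' s -> Phi s (rupd (rhoG re G s) kk n (fun _ => False)))) ->
  (forall (Gn : assignment M -> ('I_n -> M) -> M) T',
      (forall s s', (forall j, j <= m -> s (2*j) = s' (2*j)) -> Gn s = Gn s') ->
      Good (reupd re kk n (Some (m, k))) (Gupd G m n Gn) (m+1) (k+n+1) T' ->
      (id_sat T' pe <-> forall s, T' s ->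
          Phi s (rupd (rhoG re G s) kk n (fun b => s (2*m) = Some (Gn s b))))) ->
  (forall s s' rho, (forall j, j < m -> s (2*j) = s' (2*j)) -> (Phi s rho <-> Phi s' rho)) ->
  (id_sat T (EXR m k n pb pe) <-> forall s, T s -> exists P, Phi s (rupd (rhoG re G s) kk n P)).
Proof.
  intros HG Hpb Hpe HPhi.
  pose proof (Good_Einv HG) as HEi. pose proof (Good_U HG) as HU.
  assert (Htr : forall s s' (P : ('I_n -> M) -> Prop), (forall j, j < m -> s (2*j) = s' (2*j)) ->
      Phi s (rupd (rhoG re G s) kk n P) -> Phi s' (rupd (rhoG re G s') kk n P)).
  { intros s s' P Hj H. rewrite <- (rho_inv HEi Hj). apply (HPhi s s'); auto. }
  split.
  - intro H. apply (proj1 (sat_Or _ _ _)) in H. destruct H as [H|H].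
    + pose proof (proj1 (Hpb T (Good_reupd_none kk n HG)) H) as H1.
      intros s Hs. exists (fun _ => False). auto.
    + apply (proj1 (sat_EXd' m _ HU)) in H. destruct H as [Fc [HFc H]].
      apply (proj1 (sat_ALLs _ _ _)) in H. destruct H as [Fz H].
      apply (proj1 (sat_And _ _ _)) in H. destruct H as [Hd Hpe3].
      set (T3 := team_supp (dups (team_supp T (2*m) Fc) (ylist k n)) (zcol k) Fz) in *.
      set (Gn := GnY T3 m k n).
      assert (HGn : forall s s', (forall j, j <= m -> s (2*j) = s' (2*j)) -> Gn s = Gn s').
      { intros; apply GnY_inv; auto. }
      assert (Hdef : forall y, T3 y -> (forall i : 'I_n, y (ycol k i) <> None) /\ y (zcol k) <> None).
      { intros y [s2 [H2 E]]. subst y. apply dups_char in H2. destruct H2 as [s1 [_ [_ D2]]].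
        split.
        - intro i. rewrite upd_neq; [|unfold zcol, ycol; lia]. apply D2. apply in_ylist; eauto.
        - rewrite upd_eq; discriminate. }
      assert (HFn : forall s3, T3 s3 -> s3 (zcol k) = Some (Gn s3 (vals k n s3))).
      { intros s3 H3. apply (depz_Gn Hd); auto.
        - intros; apply Hdef; auto.
        - apply Hdef; auto. }
      pose proof (EXR_team HGn HFn) as HT3.
      assert (HGY : Good (reupd re kk n (Some (m,k))) (Gupd G m n Gn) (m+1) (k+n+1)
                         (Yg T m k n (fun s c => c = Fc s) Gn)).
      { apply Good_Yg; auto. intros s s' Hs Hs' Hj c Hc. subst c. apply HFc; auto. }
      assert (HpeY : id_sat (Yg T m k n (fun s c => c = Fc s) Gn) pe).
      { apply (proj1 (sat_eqv pe HT3)). exact Hpe3. }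
      pose proof (proj1 (Hpe Gn _ HGn HGY) HpeY) as Hall.
      intros s Hs.
      destruct (@Yg_over _ _ _ _ m k T n (fun s c => c = Fc s) Gn s (Fc s) HG Hs erefl HGn)
        as [s3 [Hs3 Hj]].
      exists (fun b => s3 (2*m) = Some (Gn s3 b)).
      apply (Htr s3 s); [intros j Hj'; auto|]. apply Hall; auto.
  - intro H.
    set (Ps := fun s => epsilon (inhabits (fun _ : 'I_n -> M => False))
                                (fun P => Phi s (rupd (rhoG re G s) kk n P))).
    assert (HPs : forall s, T s -> Phi s (rupd (rhoG re G s) kk n (Ps s))).
    { intros s Hs. unfold Ps. apply epsilon_spec. apply H; auto. }
    assert (HPsi : forall s s', (forall j, j < m -> s (2*j) = s' (2*j)) -> Ps s = Ps s').
    { intros s s' Hj. unfold Ps. f_equal. apply functional_extensionality; intro P.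
      apply propositional_extensionality. rewrite (rho_inv HEi Hj). apply HPhi; auto. }
    set (a0 := pt M). set (a1 := epsilon (inhabits a0) (fun a => a <> a0)).
    destruct (classic (a1 <> a0 \/ forall s, T s -> forall b, Ps s b)) as [C|C].
    + set (Gn := fun (s : assignment M) (b : 'I_n -> M) =>
                   if excluded_middle_informative (Ps s b) then a0 else a1).
      assert (HGn : forall s s', (forall j, j <= m -> s (2*j) = s' (2*j)) -> Gn s = Gn s').
      { intros s s' Hj. unfold Gn.
        assert (E : Ps s = Ps s') by (apply HPsi; intros j Hj'; apply Hj; lia).
        rewrite E. reflexivity. }
      set (Fc := fun _ : assignment M => a0).
      set (Fz := fun s2 : assignment M => Gn s2 (vals k n s2)).
      set (T3 := team_supp (dups (team_supp T (2*m) Fc) (ylist k n)) (zcol k) Fz).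
      assert (HFn : forall s3, T3 s3 -> s3 (zcol k) = Some (Gn s3 (vals k n s3))).
      { intros s3 [s2 [H2 E]]. subst s3. rewrite upd_eq. f_equal. unfold Fz.
        assert (E1 : Gn s2 = Gn (upd s2 (zcol k) (Gn s2 (vals k n s2)))).
        { apply HGn. intros j _. rewrite upd_neq; auto. unfold zcol; lia. }
        assert (E2 : vals k n s2 = vals k n (upd s2 (zcol k) (Gn s2 (vals k n s2)))).
        { apply functional_extensionality; intro i. unfold vals.
          rewrite upd_neq; auto. unfold zcol, ycol; lia. }
        rewrite <- E1, <- E2. reflexivity. }
      pose proof (EXR_team HGn HFn) as HT3.
      assert (HGY : Good (reupd re kk n (Some (m,k))) (Gupd G m n Gn) (m+1) (k+n+1)
                         (Yg T m k n (fun s c => c = Fc s) Gn)).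
      { apply Good_Yg; auto; intros s s' Hs Hs' Hj c Hc; subst c; auto. }
      apply (proj2 (sat_Or _ _ _)); right.
      apply (proj2 (sat_EXd' m _ HU)). exists Fc. split; [auto|].
      apply (proj2 (sat_ALLs _ _ _)). exists Fz. apply (proj2 (sat_And _ _ _)). split.
      * apply (proj2 (sat_eqv _ HT3)). eapply Yg_depz; [exact HGY| | |exact HGn].
        -- intros s3 [s [_ [_ [_ Hz]]]]; auto.
        -- intros s3 [s [_ [[_ X2] _]]] i. apply X2. right; right; eauto.
      * apply (proj2 (sat_eqv _ HT3)). apply (proj2 (Hpe Gn _ HGn HGY)).
        intros s3 Hs3. pose proof Hs3 as Hs3'.
        destruct Hs3' as [s [Hs [[X1 X2] [[c [Ec Hc]] Hz]]]].
        assert (Hj : forall j, j < m -> s3 (2*j) = s (2*j)).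
        { intros j Hj. apply X1. intro N; apply newcol_even in N; lia. }
        assert (EP : (fun b => s3 (2*m) = Some (Gn s3 b)) = Ps s).
        { apply functional_extensionality; intro b. apply propositional_extensionality.
          rewrite Ec. unfold Fc in Hc. subst c. unfold Gn.
          rewrite (HPsi s3 s Hj).
          destruct (excluded_middle_informative (Ps s b)) as [X|X].
          - split; auto.
          - simpl. split; [|intro; contradiction]. intro E. injection E; intro E2.
            destruct C as [C|C]; [exfalso; apply C; auto|]. apply C; auto. }
        rewrite EP. apply (Htr s s3); [intros j Hj'; symmetry; auto|]. apply HPs; auto.
    + assert (Hall : forall a b : M, a = b).
      { destruct (a1_cases M) as [X|X]; auto. exfalso. apply C. left. exact X. }
      assert (C2 : exists s0, T s0 /\ exists b, ~ Ps s0 b).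
      { apply NNPP. intro X. apply C. right. intros s Hs b. apply NNPP. intro Y.
        apply X. eauto. }
      destruct C2 as [s0 [Hs0 [b0 Hb0]]].
      apply (proj2 (sat_Or _ _ _)); left.
      apply (proj2 (Hpb T (Good_reupd_none kk n HG))). intros s Hs.
      rewrite (uniform_single T Hall (HU s s0 Hs Hs0)).
      assert (EP : (fun _ : 'I_n -> M => False) = Ps s0).
      { apply functional_extensionality; intro b. apply propositional_extensionality.
        split; [tauto|]. intro Hp. apply Hb0. rewrite (fun_single Hall b0 b). auto. }
      rewrite EP. apply HPs; auto.
Qed.


Lemma ALLR_sem (L : signature) (M : structure L) re (G : Gfam M) m k (T : team M) kk n
   (pb pe : id_formula L) (Phi : assignment M -> rel_env M -> Prop) :
  Good re G m k T ->
  (forall T', Good (reupd re kk n None) G m k T' ->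
      (id_sat T' pb <-> forall s, T' s -> Phi s (rupd (rhoG re G s) kk n (fun _ => False)))) ->
  (forall (Gn : assignment M -> ('I_n -> M) -> M) T',
      (forall s s', (forall j, j <= m -> s (2*j) = s' (2*j)) -> Gn s = Gn s') ->
      Good (reupd re kk n (Some (m, k))) (Gupd G m n Gn) (m+1) (k+n+1) T' ->
      (id_sat T' pe <-> forall s, T' s ->
          Phi s (rupd (rhoG re G s) kk n (fun b => s (2*m) = Some (Gn s b))))) ->
  (forall s s' rho, (forall j, j < m -> s (2*j) = s' (2*j)) -> (Phi s rho <-> Phi s' rho)) ->
  (id_sat T (ALLR m k n pb pe) <-> forall s, T s -> forall P, Phi s (rupd (rhoG re G s) kk n P)).
Proof.
  intros HG Hpb Hpe HPhi.
  pose proof (Good_Einv HG) as HEi. pose proof (Good_U HG) as HU.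
  assert (Htr : forall s s' (P : ('I_n -> M) -> Prop), (forall j, j < m -> s (2*j) = s' (2*j)) ->
      Phi s (rupd (rhoG re G s) kk n P) -> Phi s' (rupd (rhoG re G s') kk n P)).
  { intros s s' P Hj H. rewrite <- (rho_inv HEi Hj). apply (HPhi s s'); auto. }
  set (T3 := team_dup (dups (team_dup T (2*m)) (ylist k n)) (zcol k)).
  assert (Hsem : id_sat T (ALLR m k n pb pe) <->
                 id_sat T pb /\ id_sat T3 (IImp (depz L m k n) pe)).
  { unfold ALLR. split; intros [H1 H2]; split; auto.
    - exact (proj1 (sat_ALLs _ _ _) H2).
    - exact (proj2 (sat_ALLs (ylist k n) (team_dup T (2*m)) (IAll (zcol k) (IImp (depz L m k n) pe))) H2). }
  set (a0 := pt M). set (a1 := epsilon (inhabits a0) (fun a => a <> a0)).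
  split.
  - intros H s Hs P. destruct (proj1 Hsem H) as [Hpb1 Himp].
    destruct (classic (a1 <> a0 \/ forall b, P b)) as [C|C].
    + set (Gn := fun (_ : assignment M) (b : 'I_n -> M) =>
                   if excluded_middle_informative (P b) then a0 else a1).
      assert (HGn : forall s s', (forall j, j <= m -> s (2*j) = s' (2*j)) -> Gn s = Gn s')
        by (intros; reflexivity).
      set (Y := Yg T m k n (fun _ c => c = a0) Gn).
      assert (HGY : Good (reupd re kk n (Some (m,k))) (Gupd G m n Gn) (m+1) (k+n+1) Y).
      { apply Good_Yg; auto. }
      assert (HYsub : forall s3, Y s3 -> T3 s3).
      { intros s3 Hs3. apply ALLR_char. destruct (Yg_extd Hs3) as [s0 [Hs0 [Hx _]]]. eauto. }
      assert (Hdz : id_sat Y (depz L m k n)).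
      { eapply Yg_depz; [exact HGY| | |exact HGn].
        - intros s3 [s0 [_ [_ [_ Hz]]]]; auto.
        - intros s3 [s0 [_ [[_ X2] _]]] i. apply X2. right; right; eauto. }
      pose proof (Himp Y HYsub Hdz) as HpeY.
      pose proof (proj1 (Hpe Gn Y HGn HGY) HpeY) as Hall.
      destruct (@Yg_over _ _ _ _ m k T n (fun _ c => c = a0) Gn s a0 HG Hs erefl HGn)
        as [s3 [Hs3 Hj]].
      pose proof (Hall s3 Hs3) as H3.
      assert (EP : (fun b => s3 (2*m) = Some (Gn s3 b)) = P).
      { destruct Hs3 as [s0 [_ [_ [[c [Ec Hc]] _]]]]. subst c.
        apply functional_extensionality; intro b. apply propositional_extensionality.
        rewrite Ec. unfold Gn.
        destruct (excluded_middle_informative (P b)) as [X|X].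
        - simpl. split; auto.
        - simpl. split; [|intro; contradiction]. intro E. injection E; intro E2.
          destruct C as [C|C]; [exfalso; apply C; auto|]. apply C; auto. }
      rewrite EP in H3. apply (Htr s3 s); auto.
    + assert (Hall : forall a b : M, a = b).
      { destruct (a1_cases M) as [X|X]; auto. exfalso. apply C. left. exact X. }
      assert (C2 : exists b, ~ P b).
      { apply NNPP. intro X. apply C. right. intros b. apply NNPP. intro Y. apply X. eauto. }
      destruct C2 as [b0 Hb0].
      assert (EP : (fun _ : 'I_n -> M => False) = P).
      { apply functional_extensionality; intro b. apply propositional_extensionality.
        split; [tauto|]. intro Hp. apply Hb0. rewrite (fun_single Hall b0 b). auto. }
      rewrite <- EP. apply (proj1 (Hpb T (Good_reupd_none kk n HG)) Hpb1); auto.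
  - intro H. apply Hsem. split.
    + apply (proj2 (Hpb T (Good_reupd_none kk n HG))). intros s Hs. apply H; auto.
    + intros Y HY Hdz.
      set (Gn := GnY Y m k n).
      assert (HGn : forall s s', (forall j, j <= m -> s (2*j) = s' (2*j)) -> Gn s = Gn s').
      { intros; apply GnY_inv; auto. }
      assert (Hext : forall y, Y y -> exists s, T s /\ extd m k n s y).
      { intros y Hy. apply ALLR_char. apply HY; auto. }
      assert (HFn : forall y, Y y -> y (zcol k) = Some (Gn y (vals k n y))).
      { intros y Hy. apply (depz_Gn Hdz); auto.
        - intros y' Hy' i. destruct (Hext y' Hy') as [s [_ [_ X2]]]. apply X2. right; right; eauto.
        - destruct (Hext y Hy) as [s [_ [_ X2]]]. apply X2. right; left; auto. }
      set (Ys := Yg T m k n (fun _ _ => True) Gn).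
      assert (HGY : Good (reupd re kk n (Some (m,k))) (Gupd G m n Gn) (m+1) (k+n+1) Ys).
      { apply Good_Yg; auto. }
      assert (HYY : forall y, Y y -> Ys y).
      { intros y Hy. destruct (Hext y Hy) as [s [Hs [X1 X2]]]. exists s; split; auto.
        split; [split; auto|split; auto].
        destruct (y (2*m)) as [c|] eqn:Ec; [exists c; auto|].
        exfalso. apply (X2 (2*m)); auto. left; auto. }
      apply (sat_dc (X := Ys)); auto.
      apply (proj2 (Hpe Gn _ HGn HGY)). intros s3 Hs3.
      destruct (Yg_extd Hs3) as [s [Hs [_ Hj]]].
      apply (Htr s s3); [intros j Hj'; symmetry; auto|]. apply H; auto.
Qed.


Lemma all_gen (L : signature) (M : structure L) re (G : Gfam M) m k (T : team M)
    (body : id_formula L) (Psi : assignment M -> Prop) (Q : assignment M -> M -> Prop) :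
  Good re G m k T ->
  (forall T', Good re G (m+1) k T' -> (id_sat T' body <-> forall s, T' s -> Psi s)) ->
  (forall s a, T s -> (Psi (upd s (2*m) a) <-> Q s a)) ->
  (id_sat T (IAll (2*m) body) <-> forall s, T s -> forall a, Q s a).
Proof.
  intros HG Hb HQ. change (id_sat (team_dup T (2*m)) body <-> forall s, T s -> forall a, Q s a).
  rewrite (Hb _ (Good_dup HG)). split.
  - intros H s Hs a. apply HQ; auto. apply H. exists s, a; auto.
  - intros H s' [s [a [Hs E]]]. subst s'. apply HQ; auto.
Qed.

Lemma ex_gen (L : signature) (M : structure L) re (G : Gfam M) m k (T : team M)
    (body : id_formula L) (Psi : assignment M -> Prop) (Q : assignment M -> M -> Prop) :
  Good re G m k T ->
  (forall T', Good re G (m+1) k T' -> (id_sat T' body <-> forall s, T' s -> Psi s)) ->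
  (forall s a, T s -> (Psi (upd s (2*m) a) <-> Q s a)) ->
  (forall s s', (forall j, j < m -> s (2*j) = s' (2*j)) -> forall a, (Q s a <-> Q s' a)) ->
  (id_sat T (EXd m body) <-> forall s, T s -> exists a, Q s a).
Proof.
  intros HG Hb HQ HQi. rewrite (sat_EXd' m body (Good_U HG)). split.
  - intros [F [HF H0]]. pose proof (proj1 (Hb _ (Good_supp HG HF)) H0) as H.
    intros s Hs. exists (F s). apply HQ; auto. apply H. exists s; auto.
  - intro H. set (F := fun s => epsilon (inhabits (pt M)) (fun a => Q s a)).
    assert (HF : forall s s', T s -> T s' -> (forall j, j < m -> s (2*j) = s' (2*j)) -> F s = F s').
    { intros s s' _ _ Hj. unfold F. f_equal. apply functional_extensionality; intro a.
      apply propositional_extensionality. apply HQi; auto. }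
    exists F. split; auto. apply (Hb _ (Good_supp HG HF)).
    intros s' [s [Hs E]]. subst s'. apply HQ; auto. unfold F. apply epsilon_spec. auto.
Qed.

Lemma WFs_mono (L : signature) sg (q : so_formula L) m m' : WFs sg q m -> m <= m' -> WFs sg q m'.
Proof. intros H Hm y Hy. destruct (H y Hy) as [j [Hj E]]. exists j; split; auto. lia. Qed.

Lemma polar_iff b (X Y : Prop) : (X <-> Y) -> (polar b X <-> polar b Y).
Proof. destruct b; simpl; tauto. Qed.

Lemma main_thm (L : signature) (q : so_formula L) :
  forall pol sg re m k, WFs sg q m ->
  forall (M : structure L) (G : Gfam M) (T : team M), Good re G m k T ->
  (id_sat T (tr sg re m k pol q) <->
   forall s, T s -> polar pol (so_sat (acomp s sg) (rhoG re G s) q)).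
Proof.
  induction q as [a|kk n ts|p IH|p IHp r IHr|p IHp r IHr|p IHp r IHr|x p IH|x p IH
                 |kk n p IH|kk n p IH];
    intros pol sg re m k HW M G T HG; cbn [tr].
  all: pose proof (Good_Einv HG) as HEi.
  -
    destruct pol; simpl polar.
    + simpl. split; intros H s Hs; apply atom_sat_ren; apply H; auto.
    + rewrite (flat_neg (flat_atom (M:=M) (aren sg a)) T). simpl.
      split; intros H s Hs X; apply (H s Hs); apply atom_sat_ren; auto.
  -
    destruct (re kk n) as [[m0 k0]|] eqn:Hre.
    + exact (read_sem pol HG HW Hre).
    + assert (E : forall s, so_sat (acomp s sg) (rhoG re G s) (SRVar kk ts) <-> False).
      { intro s. simpl. unfold rhoG. rewrite Hre. split; [intros [vs [_ H]]; auto|tauto]. }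
      destruct pol; simpl polar.
      * simpl id_sat. split; intros H s Hs; [exfalso; apply (H s Hs)|].
        apply (proj1 (E s)). apply H; auto.
      * split; intros _; [intros s Hs X; apply (proj1 (E s)); exact X|]. apply sat_itop.
  -
    rewrite (IH (negb pol) sg re m k HW M G T HG).
    destruct pol; simpl polar; split; intros H s Hs; specialize (H s Hs).
    + exact H.
    + exact H.
    + intro X; apply X; exact H.
    + apply NNPP; exact H.
  -
    assert (HWp : WFs sg p m) by (intros y Hy; apply HW; left; auto).
    assert (HWr : WFs sg r m) by (intros y Hy; apply HW; right; auto).
    destruct pol.
    + rewrite sat_And (IHp true sg re m k HWp M G T HG) (IHr true sg re m k HWr M G T HG).
      simpl. split; [intros [H1 H2] s Hs; auto|intro H; split; intros s Hs; apply H; auto].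
    + rewrite (ORc_sem (A := fun s => polar false (so_sat (acomp s sg) (rhoG re G s) p))
                        (B := fun s => polar false (so_sat (acomp s sg) (rhoG re G s) r)) HG).
      * simpl. split; intros H s Hs; specialize (H s Hs); [tauto|].
        apply not_and_or; auto.
      * intros T' HG'. apply IHp; auto.
      * intros T' HG'. apply IHr; auto.
      * intros T' HG'. apply IHp; auto. eapply WFs_mono; eauto; lia.
      * intros T' HG'. apply IHr; auto. eapply WFs_mono; eauto; lia.
      * intros s s' Hj. apply polar_iff. apply mean_inv with m; auto.
      * intros s s' Hj. apply polar_iff. apply mean_inv with m; auto.
  -
    assert (HWp : WFs sg p m) by (intros y Hy; apply HW; left; auto).
    assert (HWr : WFs sg r m) by (intros y Hy; apply HW; right; auto).
    destruct pol.
    + rewrite (ORc_sem (A := fun s => polar true (so_sat (acomp s sg) (rhoG re G s) p))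
                        (B := fun s => polar true (so_sat (acomp s sg) (rhoG re G s) r)) HG).
      * simpl. tauto.
      * intros T' HG'. apply IHp; auto.
      * intros T' HG'. apply IHr; auto.
      * intros T' HG'. apply IHp; auto. eapply WFs_mono; eauto; lia.
      * intros T' HG'. apply IHr; auto. eapply WFs_mono; eauto; lia.
      * intros s s' Hj. apply polar_iff. apply mean_inv with m; auto.
      * intros s s' Hj. apply polar_iff. apply mean_inv with m; auto.
    + rewrite sat_And (IHp false sg re m k HWp M G T HG) (IHr false sg re m k HWr M G T HG).
      simpl. split; [intros [H1 H2] s Hs [X|X]; [apply (H1 s Hs)|apply (H2 s Hs)]; auto|].
      intro H; split; intros s Hs X; apply (H s Hs); auto.
  -
    assert (HWp : WFs sg p m) by (intros y Hy; apply HW; left; auto).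
    assert (HWr : WFs sg r m) by (intros y Hy; apply HW; right; auto).
    destruct pol.
    + rewrite (ORc_sem (A := fun s => polar false (so_sat (acomp s sg) (rhoG re G s) p))
                        (B := fun s => polar true (so_sat (acomp s sg) (rhoG re G s) r)) HG).
      * simpl. split; intros H s Hs; specialize (H s Hs); [tauto|].
        apply imply_to_or; auto.
      * intros T' HG'. apply IHp; auto.
      * intros T' HG'. apply IHr; auto.
      * intros T' HG'. apply IHp; auto. eapply WFs_mono; eauto; lia.
      * intros T' HG'. apply IHr; auto. eapply WFs_mono; eauto; lia.
      * intros s s' Hj. apply polar_iff. apply mean_inv with m; auto.
      * intros s s' Hj. apply polar_iff. apply mean_inv with m; auto.
    + rewrite sat_And (IHp true sg re m k HWp M G T HG) (IHr false sg re m k HWr M G T HG).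
      simpl. split; [intros [H1 H2] s Hs X; apply (H2 s Hs); auto|].
      intro H; split; intros s Hs; specialize (H s Hs).
      * apply NNPP; intro X; apply H; intro Y; exfalso; auto.
      * intro X; apply H; auto.
  -
    set (sg' := supd sg x (2*m)).
    assert (HW' : WFs sg' p (m+1)).
    { intros y Hy. unfold sg', supd. destruct (Nat.eqb_spec y x) as [E|E].
      - exists m; split; auto; lia.
      - destruct (HW y (conj E Hy)) as [j [Hj Ej]]. exists j; split; [lia|auto]. }
    set (Q := fun (pl : bool) (s : assignment M) (a : M) =>
                polar pl (so_sat (upd (acomp s sg) x a) (rhoG re G s) p)).
    assert (HQ : forall pl s a, T s -> (polar pl (so_sat (acomp (upd s (2*m) a) sg')
                      (rhoG re G (upd s (2*m) a)) p) <-> Q pl s a)).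
    { intros pl s a Hs. unfold Q. apply polar_iff.
      rewrite (@rho_inv _ _ re G m (upd s (2*m) a) s HEi).
      - apply so_sat_ext. intros y Hy. unfold acomp, sg', supd.
        destruct (Nat.eqb_spec y x) as [E|E].
        + subst y. rewrite !upd_eq. auto.
        + rewrite (upd_neq _ _ E). destruct (HW y (conj E Hy)) as [j [Hj Ej]].
          rewrite Ej upd_neq; [auto|lia].
      - intros j Hj. rewrite upd_neq; auto. lia. }
    assert (HQi : forall pl s s', (forall j, j < m -> s (2*j) = s' (2*j)) ->
                    forall a, (Q pl s a <-> Q pl s' a)).
    { intros pl s s' Hj a. unfold Q. apply polar_iff. rewrite (rho_inv HEi Hj).
      apply so_sat_ext. intros y Hy. destruct (Nat.eq_dec y x) as [E|E].
      - subst y. rewrite !upd_eq. auto.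
      - rewrite !(upd_neq _ _ E). destruct (HW y (conj E Hy)) as [j [Hj' Ej]].
        unfold acomp. rewrite Ej. auto. }
    destruct pol.
    + eapply iff_trans.
      { exact (all_gen HG (fun T' HG' => IH true sg' re (m+1) k HW' M G T' HG') (HQ true)). }
      unfold Q; simpl. tauto.
    + eapply iff_trans.
      { exact (ex_gen HG (fun T' HG' => IH false sg' re (m+1) k HW' M G T' HG') (HQ false)
                      (HQi false)). }
      unfold Q; simpl. split; intros H s Hs.
      * intro X. destruct (H s Hs) as [a Ha]. apply Ha, X.
      * apply not_all_ex_not. apply H; auto.
  -
    set (sg' := supd sg x (2*m)).
    assert (HW' : WFs sg' p (m+1)).
    { intros y Hy. unfold sg', supd. destruct (Nat.eqb_spec y x) as [E|E].
      - exists m; split; auto; lia.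
      - destruct (HW y (conj E Hy)) as [j [Hj Ej]]. exists j; split; [lia|auto]. }
    set (Q := fun (pl : bool) (s : assignment M) (a : M) =>
                polar pl (so_sat (upd (acomp s sg) x a) (rhoG re G s) p)).
    assert (HQ : forall pl s a, T s -> (polar pl (so_sat (acomp (upd s (2*m) a) sg')
                      (rhoG re G (upd s (2*m) a)) p) <-> Q pl s a)).
    { intros pl s a Hs. unfold Q. apply polar_iff.
      rewrite (@rho_inv _ _ re G m (upd s (2*m) a) s HEi).
      - apply so_sat_ext. intros y Hy. unfold acomp, sg', supd.
        destruct (Nat.eqb_spec y x) as [E|E].
        + subst y. rewrite !upd_eq. auto.
        + rewrite (upd_neq _ _ E). destruct (HW y (conj E Hy)) as [j [Hj Ej]].
          rewrite Ej upd_neq; [auto|lia].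
      - intros j Hj. rewrite upd_neq; auto. lia. }
    assert (HQi : forall pl s s', (forall j, j < m -> s (2*j) = s' (2*j)) ->
                    forall a, (Q pl s a <-> Q pl s' a)).
    { intros pl s s' Hj a. unfold Q. apply polar_iff. rewrite (rho_inv HEi Hj).
      apply so_sat_ext. intros y Hy. destruct (Nat.eq_dec y x) as [E|E].
      - subst y. rewrite !upd_eq. auto.
      - rewrite !(upd_neq _ _ E). destruct (HW y (conj E Hy)) as [j [Hj' Ej]].
        unfold acomp. rewrite Ej. auto. }
    destruct pol.
    + eapply iff_trans.
      { exact (ex_gen HG (fun T' HG' => IH true sg' re (m+1) k HW' M G T' HG') (HQ true)
                      (HQi true)). }
      unfold Q; simpl. tauto.
    + eapply iff_trans.
      { exact (all_gen HG (fun T' HG' => IH false sg' re (m+1) k HW' M G T' HG') (HQ false)). }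
      unfold Q; simpl. split; intros H s Hs.
      * intros [a Ha]. apply (H s Hs a Ha).
      * intros a Ha. apply (H s Hs). eauto.
  -
    assert (HWp : WFs sg p m) by exact HW.
    set (Phi := fun (s : assignment M) (rho : rel_env M) => polar pol (so_sat (acomp s sg) rho p)).
    assert (HPhi : forall s s' rho, (forall j, j < m -> s (2*j) = s' (2*j)) ->
                     (Phi s rho <-> Phi s' rho)).
    { intros s s' rho Hj. apply polar_iff. apply so_sat_ext. intros y Hy.
      destruct (HW y Hy) as [j [Hj' E]]. unfold acomp. rewrite E. auto. }
    assert (Hb : forall T', Good (reupd re kk n None) G m k T' ->
       (id_sat T' (tr sg (reupd re kk n None) m k pol p) <->
        forall s, T' s -> Phi s (rupd (rhoG re G s) kk n (fun _ => False)))).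
    { intros T' HG'. rewrite (IH pol sg _ m k HWp M G T' HG'). unfold Phi.
      split; intros H s Hs; specialize (H s Hs).
      - rewrite <- rhoG_none. exact H.
      - rewrite rhoG_none. exact H. }
    assert (HEm : forall kk' n' m0 k0, re kk' n' = Some (m0,k0) -> m0 < m).
    { intros kk' n' m0 k0 E. exact (proj1 (HEi _ _ _ _ E)). }
    assert (He : forall (Gn : assignment M -> ('I_n -> M) -> M) T',
       (forall s s', (forall j, j <= m -> s (2*j) = s' (2*j)) -> Gn s = Gn s') ->
       Good (reupd re kk n (Some (m,k))) (Gupd G m n Gn) (m+1) (k+n+1) T' ->
       (id_sat T' (tr sg (reupd re kk n (Some (m,k))) (m+1) (k+n+1) pol p) <->
        forall s, T' s -> Phi s (rupd (rhoG re G s) kk n (fun b => s (2*m) = Some (Gn s b))))).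
    { intros Gn T' _ HG'.
      rewrite (IH pol sg _ (m+1) (k+n+1) (WFs_mono (m' := m+1) HWp ltac:(lia)) M _ T' HG').
      unfold Phi. split; intros H s Hs; specialize (H s Hs).
      - rewrite <- (@rhoG_some _ _ re G s kk n m k Gn HEm). exact H.
      - rewrite (@rhoG_some _ _ re G s kk n m k Gn HEm). exact H. }
    destruct pol.
    + eapply iff_trans; [exact (ALLR_sem HG Hb He HPhi)|]. unfold Phi; simpl. tauto.
    + eapply iff_trans; [exact (EXR_sem HG Hb He HPhi)|]. unfold Phi; simpl.
      split; intros H s Hs.
      * intro X. destruct (H s Hs) as [P HP]. apply HP, X.
      * apply not_all_ex_not. apply H; auto.
  -
    assert (HWp : WFs sg p m) by exact HW.
    set (Phi := fun (s : assignment M) (rho : rel_env M) => polar pol (so_sat (acomp s sg) rho p)).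
    assert (HPhi : forall s s' rho, (forall j, j < m -> s (2*j) = s' (2*j)) ->
                     (Phi s rho <-> Phi s' rho)).
    { intros s s' rho Hj. apply polar_iff. apply so_sat_ext. intros y Hy.
      destruct (HW y Hy) as [j [Hj' E]]. unfold acomp. rewrite E. auto. }
    assert (Hb : forall T', Good (reupd re kk n None) G m k T' ->
       (id_sat T' (tr sg (reupd re kk n None) m k pol p) <->
        forall s, T' s -> Phi s (rupd (rhoG re G s) kk n (fun _ => False)))).
    { intros T' HG'. rewrite (IH pol sg _ m k HWp M G T' HG'). unfold Phi.
      split; intros H s Hs; specialize (H s Hs).
      - rewrite <- rhoG_none. exact H.
      - rewrite rhoG_none. exact H. }
    assert (HEm : forall kk' n' m0 k0, re kk' n' = Some (m0,k0) -> m0 < m).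
    { intros kk' n' m0 k0 E. exact (proj1 (HEi _ _ _ _ E)). }
    assert (He : forall (Gn : assignment M -> ('I_n -> M) -> M) T',
       (forall s s', (forall j, j <= m -> s (2*j) = s' (2*j)) -> Gn s = Gn s') ->
       Good (reupd re kk n (Some (m,k))) (Gupd G m n Gn) (m+1) (k+n+1) T' ->
       (id_sat T' (tr sg (reupd re kk n (Some (m,k))) (m+1) (k+n+1) pol p) <->
        forall s, T' s -> Phi s (rupd (rhoG re G s) kk n (fun b => s (2*m) = Some (Gn s b))))).
    { intros Gn T' _ HG'.
      rewrite (IH pol sg _ (m+1) (k+n+1) (WFs_mono (m' := m+1) HWp ltac:(lia)) M _ T' HG').
      unfold Phi. split; intros H s Hs; specialize (H s Hs).
      - rewrite <- (@rhoG_some _ _ re G s kk n m k Gn HEm). exact H.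
      - rewrite (@rhoG_some _ _ re G s kk n m k Gn HEm). exact H. }
    destruct pol.
    + eapply iff_trans; [exact (EXR_sem HG Hb He HPhi)|]. unfold Phi; simpl. tauto.
    + eapply iff_trans; [exact (ALLR_sem HG Hb He HPhi)|]. unfold Phi; simpl.
      split; intros H s Hs.
      * intros [P HP]. apply (H s Hs P HP).
      * intros P HP. apply (H s Hs). eauto.
Qed.


Lemma free_ANDL (L : signature) (l : list (id_formula L)) y :
  id_free (ANDL l) y -> exists p, List.In p l /\ id_free p y.
Proof.
  induction l as [|a l IH]; simpl.
  - intros [H|H]; contradiction.
  - intros [H|H]; [eauto|]. destruct (IH H) as [p [H1 H2]]; eauto.
Qed.

Lemma free_depf (L : signature) l x y : id_free (depf L l x) y -> List.In y l \/ y = x.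
Proof.
  unfold depf. simpl. intros [H|H].
  - apply free_ANDL in H. destruct H as [p [Hp Hf]]. apply List.in_map_iff in Hp.
    destruct Hp as [v [E Hv]]. subst p. simpl in Hf. apply term_var_inv in Hf. subst; auto.
  - apply term_var_inv in H; auto.
Qed.

Lemma free_ALLs (L : signature) l (p : id_formula L) y :
  id_free (ALLs l p) y -> id_free p y /\ ~ List.In y l.
Proof.
  induction l as [|v l IH]; simpl; [tauto|]. intros [H1 H2]. destruct (IH H2) as [H3 H4].
  split; auto. intros [E|E]; [subst; auto|auto].
Qed.

Lemma free_veq (L : signature) u w y : id_free (veq L u w) y -> y = u \/ y = w.
Proof. simpl. intros [H|H]; apply term_var_inv in H; auto. Qed.

Lemma free_EXd (L : signature) m (p : id_formula L) y :
  id_free (EXd m p) y -> (exists j, j < m /\ y = 2*j) \/ (id_free p y /\ y <> 2*m).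
Proof.
  unfold EXd. simpl. intros [Hne [H|H]].
  - apply free_depf in H. destruct H as [H|H]; [left; apply in_evl; auto|contradiction].
  - right; auto.
Qed.

Lemma free_ORc (L : signature) m (p0 q0 p2 q2 : id_formula L) y :
  id_free (ORc m p0 q0 p2 q2) y ->
  id_free p0 y \/ id_free q0 y \/ (exists j, j < m /\ y = 2*j) \/
  ((id_free p2 y \/ id_free q2 y) /\ y <> 2*m /\ y <> 2*(m+1)).
Proof.
  unfold ORc. intros H. destruct H as [[H|H]|H]; auto.
  apply free_EXd in H. destruct H as [H|[H Hne]]; auto.
  apply free_EXd in H. destruct H as [[j [Hj E]]|[H Hne2]].
  - destruct (Nat.eq_dec j m) as [E2|E2]; [subst; contradiction|].
    right; right; left. exists j; split; auto; lia.
  - destruct H as [[H|H]|[[H|H]|H]].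
    + apply free_veq in H; destruct H; contradiction.
    + right; right; right; auto.
    + apply free_veq in H; destruct H; contradiction.
    + contradiction.
    + right; right; right; auto.
Qed.

Definition OKv (L : signature) m k sg (q : so_formula L) y :=
  (exists j, j < m /\ y = 2*j) \/ (exists j, j < k /\ y = 2*j+1) \/ (exists x, so_free q x /\ y = sg x).

Definition WFre (re : renv) m k :=
  forall kk n m0 k0, re kk n = Some (m0,k0) -> m0 < m /\ k0 + n + 1 <= k.

Lemma odd_drop y k n :
  (exists j, j < k + n + 1 /\ y = 2*j+1) -> y <> zcol k -> ~ List.In y (ylist k n) ->
  exists j, j < k /\ y = 2*j+1.
Proof.
  intros [j [Hj E]] Hz Hy. destruct (Nat.le_gt_cases k j) as [Hk|Hk].
  - exfalso. destruct (Nat.eq_dec j k) as [E2|E2].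
    + apply Hz. subst. unfold zcol; lia.
    + apply Hy. apply in_ylist. assert (Hi : j - k - 1 < n) by lia.
      exists (Ordinal Hi). simpl. unfold ycol. lia.
  - exists j; split; auto. lia.
Qed.

Lemma free_R (L : signature) m k n (pb pe : id_formula L) y :
  id_free (ALLR m k n pb pe) y \/ id_free (EXR m k n pb pe) y ->
  id_free pb y \/ (exists j, j < m /\ y = 2*j) \/
  (y <> 2*m /\ y <> zcol k /\ ~ List.In y (ylist k n) /\ (id_free (depz L m k n) y \/ id_free pe y)).
Proof.
  intros [H|H].
  - destruct H as [H|[Hne H]]; auto. apply free_ALLs in H. destruct H as [[Hz H] Hy].
    right; right. repeat split; auto.
  - destruct H as [H|H]; auto. apply free_EXd in H. destruct H as [H|[H Hne]]; auto.
    apply free_ALLs in H. destruct H as [[Hz H] Hy].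
    right; right. repeat split; auto.
Qed.

Lemma free_depz (L : signature) m k n y :
  id_free (depz L m k n) y ->
  (exists j, j < m + 1 /\ y = 2*j) \/ List.In y (ylist k n) \/ y = zcol k.
Proof.
  unfold depz. intro H. apply free_depf in H. destruct H as [H|H]; auto.
  apply List.in_app_or in H. destruct H as [H|H]; auto. left; apply in_evl; auto.
Qed.

Lemma WFre_none re m k kk n : WFre re m k -> WFre (reupd re kk n None) m k.
Proof.
  intros H a b c d E. unfold reupd in E.
  destruct (Nat.eqb a kk); [destruct (Nat.eqb b n)|]; try discriminate; eauto.
Qed.

Lemma WFre_some re m k kk n : WFre re m k -> WFre (reupd re kk n (Some (m,k))) (m+1) (k+n+1).
Proof.
  intros H a b c d E. unfold reupd in E.
  destruct (Nat.eqb a kk) eqn:E1; [destruct (Nat.eqb b n) eqn:E2|].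
  - apply Nat.eqb_eq in E2. subst b. injection E; intros; subst. split; lia.
  - destruct (H _ _ _ _ E). split; lia.
  - destruct (H _ _ _ _ E). split; lia.
Qed.

Lemma WFre_mono re m k m' k' : WFre re m k -> m <= m' -> k <= k' -> WFre re m' k'.
Proof. intros H H1 H2 a b c d E. destruct (H _ _ _ _ E). split; lia. Qed.

Lemma quant_free (L : signature) m k sg x (p q : so_formula L) y :
  (forall x', x' <> x -> so_free p x' -> so_free q x') ->
  y <> 2*m -> OKv (m+1) k (supd sg x (2*m)) p y -> OKv m k sg q y.
Proof.
  unfold OKv. intros Hq Hne [[j [Hj E]]|[H|[x' [Hx E]]]]; auto.
  - left. exists j. split; auto. destruct (Nat.eq_dec j m); [subst; contradiction|lia].
  - unfold supd in E. destruct (Nat.eqb_spec x' x) as [E2|E2]; [contradiction|].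
    right; right. exists x'; split; auto.
Qed.

Lemma R_free (L : signature) m k n sg (p q : so_formula L) (pb pe : id_formula L) y :
  (forall x, so_free p x -> so_free q x) ->
  (id_free pb y -> OKv m k sg p y) ->
  (id_free pe y -> OKv (m+1) (k+n+1) sg p y) ->
  id_free (ALLR m k n pb pe) y \/ id_free (EXR m k n pb pe) y -> OKv m k sg q y.
Proof.
  unfold OKv. intros Hq Hb He H. apply free_R in H.
  destruct H as [H|[H|[Hm [Hz [Hy [H|H]]]]]]; auto.
  - destruct (Hb H) as [H1|[H1|[x [Hx E]]]]; auto. right; right; eauto.
  - apply free_depz in H. destruct H as [[j [Hj E]]|[H|H]]; try contradiction.
    left. exists j; split; auto. destruct (Nat.eq_dec j m); [subst; contradiction|lia].
  - destruct (He H) as [[j [Hj E]]|[H1|[x [Hx E]]]].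
    + left. exists j; split; auto. destruct (Nat.eq_dec j m); [subst; contradiction|lia].
    + right; left. apply (odd_drop (n := n)); auto.
    + right; right; eauto.
Qed.

Lemma tr_free (L : signature) (q : so_formula L) :
  forall pol sg re m k y, WFre re m k -> id_free (tr sg re m k pol q) y -> OKv m k sg q y.
Proof.
  unfold OKv.
  induction q as [a|kk n ts|p IH|p IHp r IHr|p IHp r IHr|p IHp r IHr|x p IH|x p IH
                 |kk n p IH|kk n p IH];
    intros pol sg re m k y Hre Hf; cbn [tr] in Hf.
  - assert (Hf' : id_free (IAtom (aren sg a)) y) by (destruct pol; simpl in *; tauto).
    simpl in Hf'. apply atom_var_ren in Hf'. destruct Hf' as [x [Hx E]]. right; right; eauto.
  - destruct (re kk n) as [[m0 k0]|] eqn:E.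
    + destruct (Hre _ _ _ _ E) as [H1 H2].
      assert (Hf' : id_free (eqs sg k0 ts) y \/ id_free (veq L (zcol k0) (2*m0)) y).
      { destruct pol; simpl in Hf |- *; tauto. }
      destruct Hf' as [Hf'|Hf'].
      * apply free_ANDL in Hf'. destruct Hf' as [p [Hp Hf2]]. apply List.in_map_iff in Hp.
        destruct Hp as [i [Ep _]]. subst p. simpl in Hf2. destruct Hf2 as [Hf2|Hf2].
        -- apply term_var_inv in Hf2. subst y. right; left. exists (k0 + 1 + i).
           pose proof (ltn_ord i). split; [lia|unfold ycol; lia].
        -- apply term_var_ren in Hf2. destruct Hf2 as [x [Hx Ex]]. right; right.
           exists x; split; auto. simpl. eauto.
      * apply free_veq in Hf'. destruct Hf' as [Ey|Ey]; subst y.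
        -- right; left. exists k0; split; [lia|unfold zcol; lia].
        -- left. exists m0; split; auto.
    + destruct pol; simpl in Hf; tauto.
  - apply (IH _ _ _ _ _ _ Hre Hf).
  - destruct pol.
    + destruct Hf as [Hf|Hf].
      * destruct (IHp _ _ _ _ _ _ Hre Hf) as [H|[H|[x [Hx E]]]]; auto.
        right; right; exists x; split; [left|]; auto.
      * destruct (IHr _ _ _ _ _ _ Hre Hf) as [H|[H|[x [Hx E]]]]; auto.
        right; right; exists x; split; [right|]; auto.
    + assert (Hre2 : WFre re (m+2) k).
      { intros a b c d E. destruct (Hre _ _ _ _ E). split; lia. }
      apply free_ORc in Hf. destruct Hf as [Hf|[Hf|[Hf|[[Hf|Hf] [Hn1 Hn2]]]]]; auto.
      * destruct (IHp _ _ _ _ _ _ Hre Hf) as [H|[H|[x [Hx E]]]]; auto.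
        right; right; exists x; split; [left|]; auto.
      * destruct (IHr _ _ _ _ _ _ Hre Hf) as [H|[H|[x [Hx E]]]]; auto.
        right; right; exists x; split; [right|]; auto.
      * destruct (IHp _ _ _ _ _ _ Hre2 Hf) as [[j [Hj E]]|[H|[x [Hx E]]]]; auto.
        -- left. exists j. split; auto. subst y. destruct (Nat.le_gt_cases m j); [|lia].
           exfalso. assert (j = m \/ j = m+1) as [->| ->] by lia; auto.
        -- right; right; exists x; split; [left|]; auto.
      * destruct (IHr _ _ _ _ _ _ Hre2 Hf) as [[j [Hj E]]|[H|[x [Hx E]]]]; auto.
        -- left. exists j. split; auto. subst y. destruct (Nat.le_gt_cases m j); [|lia].
           exfalso. assert (j = m \/ j = m+1) as [->| ->] by lia; auto.
        -- right; right; exists x; split; [right|]; auto.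
  - destruct pol.
    + assert (Hre2 : WFre re (m+2) k).
      { intros a b c d E. destruct (Hre _ _ _ _ E). split; lia. }
      apply free_ORc in Hf. destruct Hf as [Hf|[Hf|[Hf|[[Hf|Hf] [Hn1 Hn2]]]]]; auto.
      * destruct (IHp _ _ _ _ _ _ Hre Hf) as [H|[H|[x [Hx E]]]]; auto.
        right; right; exists x; split; [left|]; auto.
      * destruct (IHr _ _ _ _ _ _ Hre Hf) as [H|[H|[x [Hx E]]]]; auto.
        right; right; exists x; split; [right|]; auto.
      * destruct (IHp _ _ _ _ _ _ Hre2 Hf) as [[j [Hj E]]|[H|[x [Hx E]]]]; auto.
        -- left. exists j. split; auto. subst y. destruct (Nat.le_gt_cases m j); [|lia].
           exfalso. assert (j = m \/ j = m+1) as [->| ->] by lia; auto.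
        -- right; right; exists x; split; [left|]; auto.
      * destruct (IHr _ _ _ _ _ _ Hre2 Hf) as [[j [Hj E]]|[H|[x [Hx E]]]]; auto.
        -- left. exists j. split; auto. subst y. destruct (Nat.le_gt_cases m j); [|lia].
           exfalso. assert (j = m \/ j = m+1) as [->| ->] by lia; auto.
        -- right; right; exists x; split; [right|]; auto.
    + destruct Hf as [Hf|Hf].
      * destruct (IHp _ _ _ _ _ _ Hre Hf) as [H|[H|[x [Hx E]]]]; auto.
        right; right; exists x; split; [left|]; auto.
      * destruct (IHr _ _ _ _ _ _ Hre Hf) as [H|[H|[x [Hx E]]]]; auto.
        right; right; exists x; split; [right|]; auto.
  - destruct pol.
    + assert (Hre2 : WFre re (m+2) k).
      { intros a b c d E. destruct (Hre _ _ _ _ E). split; lia. }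
      apply free_ORc in Hf. destruct Hf as [Hf|[Hf|[Hf|[[Hf|Hf] [Hn1 Hn2]]]]]; auto.
      * destruct (IHp _ _ _ _ _ _ Hre Hf) as [H|[H|[x [Hx E]]]]; auto.
        right; right; exists x; split; [left|]; auto.
      * destruct (IHr _ _ _ _ _ _ Hre Hf) as [H|[H|[x [Hx E]]]]; auto.
        right; right; exists x; split; [right|]; auto.
      * destruct (IHp _ _ _ _ _ _ Hre2 Hf) as [[j [Hj E]]|[H|[x [Hx E]]]]; auto.
        -- left. exists j. split; auto. subst y. destruct (Nat.le_gt_cases m j); [|lia].
           exfalso. assert (j = m \/ j = m+1) as [->| ->] by lia; auto.
        -- right; right; exists x; split; [left|]; auto.
      * destruct (IHr _ _ _ _ _ _ Hre2 Hf) as [[j [Hj E]]|[H|[x [Hx E]]]]; auto.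
        -- left. exists j. split; auto. subst y. destruct (Nat.le_gt_cases m j); [|lia].
           exfalso. assert (j = m \/ j = m+1) as [->| ->] by lia; auto.
        -- right; right; exists x; split; [right|]; auto.
    + destruct Hf as [Hf|Hf].
      * destruct (IHp _ _ _ _ _ _ Hre Hf) as [H|[H|[x [Hx E]]]]; auto.
        right; right; exists x; split; [left|]; auto.
      * destruct (IHr _ _ _ _ _ _ Hre Hf) as [H|[H|[x [Hx E]]]]; auto.
        right; right; exists x; split; [right|]; auto.
  - assert (Hre1 : WFre re (m+1) k) by (apply (WFre_mono Hre); lia).
    assert (Hq : forall x', x' <> x -> so_free p x' -> so_free (SAll x p) x') by (simpl; auto).
    destruct pol.
    + destruct Hf as [Hne Hf]. exact (quant_free Hq Hne (IH _ _ _ _ _ _ Hre1 Hf)).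
    + apply free_EXd in Hf. destruct Hf as [H|[Hf Hne]]; [left; auto|].
      exact (quant_free Hq Hne (IH _ _ _ _ _ _ Hre1 Hf)).
  - assert (Hre1 : WFre re (m+1) k) by (apply (WFre_mono Hre); lia).
    assert (Hq : forall x', x' <> x -> so_free p x' -> so_free (SEx x p) x') by (simpl; auto).
    destruct pol.
    + apply free_EXd in Hf. destruct Hf as [H|[Hf Hne]]; [left; auto|].
      exact (quant_free Hq Hne (IH _ _ _ _ _ _ Hre1 Hf)).
    + destruct Hf as [Hne Hf]. exact (quant_free Hq Hne (IH _ _ _ _ _ _ Hre1 Hf)).
  - destruct pol; [set (b := true)|set (b := false)];
    (apply (R_free (n := n) (p := p) (q := SAllR kk n p)
             (pb := tr sg (reupd re kk n None) m k b p)
             (pe := tr sg (reupd re kk n (Some (m,k))) (m+1) (k+n+1) b p));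
     [simpl; auto
     |intro H; apply (IH _ _ _ _ _ _ (WFre_none (kk:=kk) (n:=n) Hre) H)
     |intro H; apply (IH _ _ _ _ _ _ (WFre_some (kk:=kk) (n:=n) Hre) H)
     |unfold b; auto]).
  - destruct pol; [set (b := true)|set (b := false)];
    (apply (R_free (n := n) (p := p) (q := SExR kk n p)
             (pb := tr sg (reupd re kk n None) m k b p)
             (pe := tr sg (reupd re kk n (Some (m,k))) (m+1) (k+n+1) b p));
     [simpl; auto
     |intro H; apply (IH _ _ _ _ _ _ (WFre_none (kk:=kk) (n:=n) Hre) H)
     |intro H; apply (IH _ _ _ _ _ _ (WFre_some (kk:=kk) (n:=n) Hre) H)
     |unfold b; auto]).
Qed.

Theorem theorem5p8 (L : signature) (psi : so_formula L) :
  so_sentence psi ->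
  exists phi : id_formula L,
    id_sentence phi /\
    (forall M : structure L, so_true M psi <-> id_true M phi).
Proof.
  intros [Hfv Hfr].
  exists (tr (fun _ => 0) (fun _ _ => None) 0 0 true psi). split.
  - intros y Hy. apply tr_free in Hy; [|intros a b c d E; discriminate].
    destruct Hy as [[j [Hj _]]|[[j [Hj _]]|[x [Hx _]]]]; [lia|lia|apply (Hfv x Hx)].
  - intro M. set (G := (fun _ n _ _ => pt M) : Gfam M).
    assert (HG : Good (fun _ _ => None) G 0 0 (fun s => s = empty_assignment M)).
    { split; [|split; [|split]].
      - intros s s' E1 E2 v. subst. tauto.
      - intros s E j. subst s. split; intro; reflexivity.
      - intros s _ j Hj. lia.
      - intros; discriminate. }
    assert (HW : WFs (fun _ => 0) psi 0) by (intros y Hy; exfalso; apply (Hfv y Hy)).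
    pose proof (main_thm true HW HG) as H.
    unfold id_true. split.
    + intro Hs. apply (proj2 H). intros s E. subst s. exact Hs.
    + intro X. exact (proj1 H X _ erefl).
Qed.
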